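(* Assume (H3.1) and (H3.2). The function $\widetilde W(t,x):=\lim_{m\to\infty}W_m(t,x)$ (a nondecreasing limit; $\widetilde W$ is lower semicontinuous with at most linear growth) is a viscosity supersolution of $$\min\Big\{w(t,x)-h(t,x),\;-\partial_tw(t,x)-H^-(t,x,w,Dw,D^2w)\Big\}=0,\ (t,x)\in[0,T)\times\mathbb R^n,\qquad w(T,x)=\Phi(x).$$
   Context: Setting. Fix $T>0$. Let $\Omega=C_0([0,T];\mathbb R^d)$, $P$ the Wiener measure, $B$ the coordinate Brownian motion, $\mathbb F=(\mathcal F_s)$ its $P$-augmented natural filtration. $U,V$ are compact metric spaces. $b:[0,T]\times\mathbb R^n\times U\times V\to\mathbb R^n$ and $\sigma:[0,T]\times\mathbb R^n\times U\times V\to\mathbb R^{n\times d}$ satisfy (H3.1): for each $x$ they are continuous in $(t,u,v)$, and Lipschitz in $x$ uniformly in $(t,u,v)$. $\Phi:\mathbb R^n\to\mathbb R$, $h:[0,T]\times\mathbb R^n\to\mathbb R$, $f:[0,T]\times\mathbb R^n\times\mathbb R\times\mathbb R^d\times U\times V\to\mathbb R$ satisfy (H3.2): for each $(x,y,z)$, $f(\cdot,x,y,z,\cdot,\cdot)$ is continuous in $(t,u,v)$ and $f$ is Lipschitz in $(x,y,z)$ uniformly in $(t,u,v)$; $\Phi$ is Lipschitz; $h(\cdot,x)$ is continuous for each $x$, $h$ is Lipschitz in $x$ uniformly in $t$, and $h(T,x)\le\Phi(x)$. $\mathcal U_{t,s}$, $\mathcal V_{t,s}$ are the sets of $U$-,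 resp. $V$-valued progressively measurable processes on $[t,s]$; $\mathcal B_{t,s}$ is the set of nonanticipative strategies $\beta:\mathcal U_{t,s}\to\mathcal V_{t,s}$. $X^{t,x;u,v}$ solves $dX_s=b(s,X_s,u_s,v_s)ds+\sigma(s,X_s,u_s,v_s)dB_s$, $X_t=x$. For $m\in\mathbb N$, $({}^mY^{t,x;u,v},{}^mZ^{t,x;u,v})$ solves the BSDE ${}^mY_s=\Phi(X^{t,x;u,v}_T)+\int_s^T f(r,X^{t,x;u,v}_r,{}^mY_r,{}^mZ_r,u_r,v_r)dr+m\int_s^T({}^mY_r-h(r,X^{t,x;u,v}_r))^-dr-\int_s^T{}^mZ_rdB_r$, $s\in[t,T]$; $W_m(t,x)=\operatorname{essinf}_{\beta\in\mathcal B_{t,T}}\operatorname{esssup}_{u\in\mathcal U_{t,T}}{}^mY^{t,x;u,\beta(u)}_t$. Each $W_m$ is deterministic, continuous, of linear growth, nondecreasing in $m$, and is the viscosity solution of $-\partial_tW_m-\sup_u\inf_v\{\tfrac12\mathrm{tr}(\sigma\sigma^TD^2W_m)+DW_m\cdot b+f(t,x,W_m,DW_m\sigma,u,v)+m(W_m-h(t,x))^-\}=0$, $W_m(T,\cdot)=\Phi$. Hamiltonian: $H^-(t,x,y,q,X)=\sup_{u\in U}\inf_{v\in V}\{\tfrac12\mathrm{tr}(\sigma\sigma^T(t,x,u,v)X)+q\cdot b(t,x,u,v)+f(t,x,y,q\sigma(t,x,u,v),u,v)\}$. Supersolution: a lower semicontinuous $w$ is a viscosity supersolution if $w(T,x)\ge\Phi(x)$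 for all $x$ and, for every $\varphi\in C^3_{l,b}([0,T]\times\mathbb R^n)$ ($C^3$ with bounded derivatives of orders 1–3) such that $w-\varphi$ attains a local minimum at $(t,x)\in[0,T)\times\mathbb R^n$, $\min\{w(t,x)-h(t,x),-\partial_t\varphi(t,x)-H^-(t,x,w(t,x),D\varphi(t,x),D^2\varphi(t,x))\}\ge0$. *)

(* Defs.v *)
From Stdlib Require Import Reals ClassicalEpsilon.
Open Scope R_scope.

(** * Conventions
    Points of R^k are represented as [nat -> R] vanishing at indices >= k
    ([vec k x]); matrices as [nat -> nat -> R] (only entries inside the
    relevant index ranges are ever used). *)

Fixpoint rsum (k : nat) (g : nat -> R) : R :=
  match k with O => 0 | S j => rsum j g + g j end.

Definition vec (k : nat) (x : nat -> R) : Prop := forall i, (k <= i)%nat -> x i = 0.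
Definition vnorm (k : nat) (x : nat -> R) : R := rsum k (fun i => Rabs (x i)).
Definition vdist (k : nat) (x y : nat -> R) : R := vnorm k (fun i => x i - y i).
Definition mdist (k l : nat) (A B : nat -> nat -> R) : R :=
  rsum k (fun i => rsum l (fun j => Rabs (A i j - B i j))).

Definition Rsup (E : R -> Prop) : R := epsilon (inhabits 0) (fun s => is_lub E s).
Definition Rinf (E : R -> Prop) : R := - Rsup (fun y => E (- y)).
Definition supinf {U V : Type} (G : U -> V -> R) : R :=
  Rsup (fun y => exists u, y = Rinf (fun z => exists v, z = G u v)).

Definition negpart (a : R) : R := Rmax 0 (- a).

Definition is_metric (U : Type) (dU : U -> U -> R) : Prop :=
  (forall a b, 0 <= dU a b) /\ (forall a b, dU a b = 0 <-> a = b) /\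
  (forall a b, dU a b = dU b a) /\ (forall a b c, dU a c <= dU a b + dU b c).
Definition seq_compact (U : Type) (dU : U -> U -> R) : Prop :=
  forall s : nat -> U, exists (phi : nat -> nat) (l : U),
    (forall k, (phi k < phi (S k))%nat) /\ Un_cv (fun k => dU (s (phi k)) l) 0.
Definition compact_metric_space (U : Type) (dU : U -> U -> R) : Prop :=
  inhabited U /\ is_metric U dU /\ seq_compact U dU.

Definition H3_1 (T : R) (n d : nat) (U V : Type) (dU : U -> U -> R) (dV : V -> V -> R)
  (b : R -> (nat -> R) -> U -> V -> (nat -> R))
  (sig : R -> (nat -> R) -> U -> V -> nat -> nat -> R) : Prop :=
  (forall x, vec n x -> forall t u v, 0 <= t <= T -> forall eps, eps > 0 ->
     exists del, del > 0 /\ forall t' u' v', 0 <= t' <= T -> Rabs (t' - t) < del ->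
       dU u' u < del -> dV v' v < del ->
       vdist n (b t' x u' v') (b t x u v) < eps /\
       mdist n d (sig t' x u' v') (sig t x u v) < eps) /\
  (exists L, forall t x x' u v, 0 <= t <= T -> vec n x -> vec n x' ->
     vdist n (b t x u v) (b t x' u v) <= L * vdist n x x' /\
     mdist n d (sig t x u v) (sig t x' u v) <= L * vdist n x x').

Definition H3_2 (T : R) (n d : nat) (U V : Type) (dU : U -> U -> R) (dV : V -> V -> R)
  (f : R -> (nat -> R) -> R -> (nat -> R) -> U -> V -> R)
  (Phi : (nat -> R) -> R) (h : R -> (nat -> R) -> R) : Prop :=
  (forall x y z, vec n x -> vec d z -> forall t u v, 0 <= t <= T -> forall eps, eps > 0 ->
     exists del, del > 0 /\ forall t' u' v', 0 <= t' <= T -> Rabs (t' - t) < del ->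
       dU u' u < del -> dV v' v < del ->
       Rabs (f t' x y z u' v' - f t x y z u v) < eps) /\
  (exists L, forall t x x' y y' z z' u v, 0 <= t <= T -> vec n x -> vec n x' ->
     vec d z -> vec d z' ->
     Rabs (f t x y z u v - f t x' y' z' u v)
       <= L * (vdist n x x' + Rabs (y - y') + vdist d z z')) /\
  (exists L, forall x x', vec n x -> vec n x' -> Rabs (Phi x - Phi x') <= L * vdist n x x') /\
  (forall x, vec n x -> forall t, 0 <= t <= T -> forall eps, eps > 0 ->
     exists del, del > 0 /\ forall t', 0 <= t' <= T -> Rabs (t' - t) < del ->
       Rabs (h t' x - h t x) < eps) /\
  (exists L, forall t x x', 0 <= t <= T -> vec n x -> vec n x' ->
     Rabs (h t x - h t x') <= L * vdist n x x') /\
  (forall x, vec n x -> h T x <= Phi x).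

(* tr(s s^T X) for s : n x d, X : n x n *)
Definition trace_term (n d : nat) (s X : nat -> nat -> R) : R :=
  rsum n (fun i => rsum n (fun j => rsum d (fun k => s i k * s j k) * X j i)).
Definition dotv (n : nat) (q p : nat -> R) : R := rsum n (fun i => q i * p i).
(* the row vector q s in R^d *)
Definition qsig (n d : nat) (q : nat -> R) (s : nat -> nat -> R) : nat -> R :=
  fun k => if Nat.ltb k d then rsum n (fun i => q i * s i k) else 0.

Definition Hinner {U V : Type} (n d : nat)
  (b : R -> (nat -> R) -> U -> V -> (nat -> R))
  (sig : R -> (nat -> R) -> U -> V -> nat -> nat -> R)
  (f : R -> (nat -> R) -> R -> (nat -> R) -> U -> V -> R)
  (t : R) (x : nat -> R) (y : R) (q : nat -> R) (X : nat -> nat -> R) (u : U) (v : V) : R :=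
  / 2 * trace_term n d (sig t x u v) X + dotv n q (b t x u v)
  + f t x y (qsig n d q (sig t x u v)) u v.

Definition Hminus {U V : Type} (n d : nat) b sig f t x y q X : R :=
  supinf (fun (u : U) (v : V) => @Hinner U V n d b sig f t x y q X u v).

(* Hamiltonian of the penalized equation (penalty inside sup inf, as in the paper) *)
Definition Hpen {U V : Type} (n d : nat) b sig f (h : R -> (nat -> R) -> R) (m : nat)
  t x y q X : R :=
  supinf (fun (u : U) (v : V) =>
    @Hinner U V n d b sig f t x y q X u v + INR m * negpart (y - h t x)).

(** * Test functions C^3_{l,b}
    Coordinate 0 is time, coordinate (S i) is x_i (i < n). *)
Definition move (a : nat) (t : R) (x : nat -> R) (hh : R) (g : R -> (nat -> R) -> R) : R :=
  match a with
  | O => g (t + hh) x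
  | S i => g t (fun j => if Nat.eqb j i then x j + hh else x j)
  end.
Definition coord (n a : nat) : Prop := (a <= n)%nat.
Definition partial (n a : nat) (g g' : R -> (nat -> R) -> R) : Prop :=
  forall t x, vec n x -> derivable_pt_lim (fun hh => move a t x hh g) 0 (g' t x).
Definition contF (n : nat) (g : R -> (nat -> R) -> R) : Prop :=
  forall t x, vec n x -> forall eps, eps > 0 -> exists del, del > 0 /\
    forall s y, vec n y -> Rabs (s - t) < del -> vdist n y x < del ->
      Rabs (g s y - g t x) < eps.

Definition C3lb (T : R) (n : nat) (phi : R -> (nat -> R) -> R)
  (D1 : nat -> R -> (nat -> R) -> R) (D2 : nat -> nat -> R -> (nat -> R) -> R)
  (D3 : nat -> nat -> nat -> R -> (nat -> R) -> R) : Prop :=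
  contF n phi /\
  (forall a, coord n a -> partial n a phi (D1 a) /\ contF n (D1 a)) /\
  (forall a a', coord n a -> coord n a' -> partial n a' (D1 a) (D2 a a') /\ contF n (D2 a a')) /\
  (forall a a' a'', coord n a -> coord n a' -> coord n a'' ->
     partial n a'' (D2 a a') (D3 a a' a'') /\ contF n (D3 a a' a'')) /\
  (exists M, forall a a' a'', coord n a -> coord n a' -> coord n a'' ->
     forall t x, 0 <= t <= T -> vec n x ->
       Rabs (D1 a t x) <= M /\ Rabs (D2 a a' t x) <= M /\ Rabs (D3 a a' a'' t x) <= M).

Definition loc_min (T : R) (n : nat) (g : R -> (nat -> R) -> R) (t : R) (x : nat -> R) : Prop :=
  exists del, del > 0 /\ forall s y, 0 <= s <= T -> vec n y -> Rabs (s - t) < del ->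
    vdist n y x < del -> g t x <= g s y.
Definition loc_max (T : R) (n : nat) (g : R -> (nat -> R) -> R) (t : R) (x : nat -> R) : Prop :=
  loc_min T n (fun s y => - g s y) t x.

Definition lsc (T : R) (n : nat) (w : R -> (nat -> R) -> R) : Prop :=
  forall t x, 0 <= t <= T -> vec n x -> forall eps, eps > 0 -> exists del, del > 0 /\
    forall s y, 0 <= s <= T -> vec n y -> Rabs (s - t) < del -> vdist n y x < del ->
      w t x - eps < w s y.
Definition contD (T : R) (n : nat) (w : R -> (nat -> R) -> R) : Prop :=
  forall t x, 0 <= t <= T -> vec n x -> forall eps, eps > 0 -> exists del, del > 0 /\
    forall s y, 0 <= s <= T -> vec n y -> Rabs (s - t) < del -> vdist n y x < del ->
      Rabs (w s y - w t x) < eps.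
Definition lin_growth (T : R) (n : nat) (w : R -> (nat -> R) -> R) : Prop :=
  exists C, forall t x, 0 <= t <= T -> vec n x -> Rabs (w t x) <= C * (1 + vnorm n x).

Definition visc_sol_pen {U V : Type} (T : R) (n d : nat) b sig f
  (Phi : (nat -> R) -> R) (h : R -> (nat -> R) -> R) (m : nat) (w : R -> (nat -> R) -> R) : Prop :=
  (forall x, vec n x -> w T x = Phi x) /\
  (forall phi D1 D2 D3, C3lb T n phi D1 D2 D3 -> forall t x, 0 <= t < T -> vec n x ->
     loc_max T n (fun s y => w s y - phi s y) t x ->
     - D1 O t x - @Hpen U V n d b sig f h m t x (w t x)
         (fun i => D1 (S i) t x) (fun i j => D2 (S i) (S j) t x) <= 0) /\
  (forall phi D1 D2 D3, C3lb T n phi D1 D2 D3 -> forall t x, 0 <= t < T -> vec n x ->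
     loc_min T n (fun s y => w s y - phi s y) t x ->
     - D1 O t x - @Hpen U V n d b sig f h m t x (w t x)
         (fun i => D1 (S i) t x) (fun i j => D2 (S i) (S j) t x) >= 0).

Definition visc_super_obst {U V : Type} (T : R) (n d : nat) b sig f
  (Phi : (nat -> R) -> R) (h : R -> (nat -> R) -> R) (w : R -> (nat -> R) -> R) : Prop :=
  lsc T n w /\
  (forall x, vec n x -> w T x >= Phi x) /\
  (forall phi D1 D2 D3, C3lb T n phi D1 D2 D3 -> forall t x, 0 <= t < T -> vec n x ->
     loc_min T n (fun s y => w s y - phi s y) t x ->
     Rmin (w t x - h t x)
          (- D1 O t x - @Hminus U V n d b sig f t x (w t x)
              (fun i => D1 (S i) t x) (fun i j => D2 (S i) (S j) t x)) >= 0).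

(* Main.v *)
Require Import Defs.
From Stdlib Require Import Reals ClassicalEpsilon Lra Lia Classical FunctionalExtensionality.
Open Scope R_scope.

Lemma rsum_ext : forall k g g', (forall i, (i < k)%nat -> g i = g' i) -> rsum k g = rsum k g'.
Proof. induction k; intros g g' H; simpl; auto. rewrite (IHk g g'); [rewrite H; auto|]; intros; apply H; lia. Qed.

Lemma rsum_plus : forall k g g', rsum k (fun i => g i + g' i) = rsum k g + rsum k g'.
Proof. induction k; intros; simpl; [lra|rewrite IHk; lra]. Qed.
Lemma rsum_minus : forall k g g', rsum k (fun i => g i - g' i) = rsum k g - rsum k g'.
Proof. induction k; intros; simpl; [lra|rewrite IHk; lra]. Qed.
Lemma rsum_scal : forall k c g, rsum k (fun i => c * g i) = c * rsum k g.
Proof. induction k; intros; simpl; [lra|rewrite IHk; lra]. Qed.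
Lemma rsum_zero : forall k, rsum k (fun _ => 0) = 0.
Proof. induction k; simpl; [lra|rewrite IHk; lra]. Qed.
Lemma rsum_nonneg : forall k g, (forall i, (i < k)%nat -> 0 <= g i) -> 0 <= rsum k g.
Proof. induction k; intros g H; simpl; [lra|]. assert (0 <= rsum k g) by (apply IHk; intros; apply H; lia). assert (0 <= g k) by (apply H; lia). lra. Qed.
Lemma rsum_le_mono : forall k g g', (forall i, (i < k)%nat -> g i <= g' i) -> rsum k g <= rsum k g'.
Proof. induction k; intros g g' H; simpl; [lra|]. assert (rsum k g <= rsum k g') by (apply IHk; intros; apply H; lia). assert (g k <= g' k) by (apply H; lia). lra. Qed.
Lemma rsum_term : forall k g i, (forall j, (j < k)%nat -> 0 <= g j) -> (i < k)%nat -> g i <= rsum k g.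
Proof. induction k; intros g i H Hi; [lia|]. simpl. destruct (Nat.eq_dec i k).
 - subst. assert (0 <= rsum k g) by (apply rsum_nonneg; intros; apply H; lia). lra.
 - assert (g i <= rsum k g) by (apply IHk; [intros; apply H; lia| lia]). assert (0 <= g k) by (apply H; lia). lra. Qed.
Lemma rsum_abs : forall k g, Rabs (rsum k g) <= rsum k (fun i => Rabs (g i)).
Proof. induction k; intros; simpl. rewrite Rabs_R0; lra. eapply Rle_trans; [apply Rabs_triang|]. specialize (IHk g). lra. Qed.
Lemma rsum_delta : forall k i c, (i < k)%nat -> rsum k (fun j => if Nat.eqb j i then c else 0) = c.
Proof. induction k; intros i c Hi; [lia|]. simpl. destruct (Nat.eq_dec i k).
 - subst. rewrite Nat.eqb_refl. rewrite (rsum_ext k _ (fun _ => 0)). rewrite rsum_zero; lra.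
   intros j Hj. destruct (Nat.eqb_spec j k); [lia|auto].
 - rewrite IHk by lia. destruct (Nat.eqb_spec k i); [lia|lra]. Qed.
Lemma rsum_cv : forall k (a : nat -> nat -> R) (b : nat -> R),
  (forall i, (i < k)%nat -> Un_cv (fun j => a j i) (b i)) -> Un_cv (fun j => rsum k (a j)) (rsum k b).
Proof. induction k; intros a b H; simpl.
 - intros e He; exists O; intros; unfold R_dist; rewrite Rminus_diag, Rabs_R0; lra.
 - apply CV_plus; [apply IHk; intros; apply H; lia| apply H; lia]. Qed.
Lemma rsum_derive : forall k (F : nat -> R -> R) F' x,
  (forall i, (i < k)%nat -> derivable_pt_lim (F i) x (F' i)) ->
  derivable_pt_lim (fun h => rsum k (fun i => F i h)) x (rsum k F').
Proof. induction k; intros F F' x H; simpl.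
 - apply (derivable_pt_lim_const 0).
 - apply (derivable_pt_lim_plus (fun h => rsum k (fun i => F i h)) (F k)); [apply IHk; intros; apply H; lia| apply H; lia]. Qed.

Lemma vdist_nonneg : forall n x y, 0 <= vdist n x y.
Proof. intros; unfold vdist, vnorm; apply rsum_nonneg; intros; apply Rabs_pos. Qed.
Lemma vdist_sym : forall n x y, vdist n x y = vdist n y x.
Proof. intros; unfold vdist, vnorm; apply rsum_ext; intros; apply Rabs_minus_sym. Qed.
Lemma vdist_self : forall n x, vdist n x x = 0.
Proof. intros; unfold vdist, vnorm. rewrite (rsum_ext _ _ (fun _ => 0)); [apply rsum_zero|]. intros; rewrite Rminus_diag, Rabs_R0; auto. Qed.
Lemma vdist_tri : forall n x y z, vdist n x z <= vdist n x y + vdist n y z.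
Proof. intros; unfold vdist, vnorm. rewrite <- rsum_plus. apply rsum_le_mono. intros.
 replace (x i - z i) with ((x i - y i) + (y i - z i)) by ring. apply Rabs_triang. Qed.
Lemma vdist_coord : forall n x y i, (i < n)%nat -> Rabs (x i - y i) <= vdist n x y.
Proof. intros; unfold vdist, vnorm. apply (rsum_term n (fun i => Rabs (x i - y i))); auto. intros; apply Rabs_pos. Qed.
Lemma mdist_coord : forall n d A B i k, (i < n)%nat -> (k < d)%nat -> Rabs (A i k - B i k) <= mdist n d A B.
Proof. intros; unfold mdist. eapply Rle_trans; [|apply (rsum_term n (fun i => rsum d (fun j => Rabs (A i j - B i j))))].
 apply (rsum_term d (fun j => Rabs (A i j - B i j))); auto; intros; apply Rabs_pos.
 intros; apply rsum_nonneg; intros; apply Rabs_pos. auto. Qed.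
Lemma mdist_nonneg : forall n d A B, 0 <= mdist n d A B.
Proof. intros; unfold mdist; apply rsum_nonneg; intros; apply rsum_nonneg; intros; apply Rabs_pos. Qed.

Lemma cv_abs0 : forall u l, Un_cv u l <-> Un_cv (fun j => Rabs (u j - l)) 0.
Proof. intros; split; intros H e He; destruct (H e He) as [N HN]; exists N; intros j Hj; specialize (HN j Hj);
 unfold R_dist in *; rewrite Rminus_0_r, Rabs_Rabsolu in *; auto. Qed.
Lemma cv_const : forall c, Un_cv (fun _ => c) c.
Proof. intros c e He; exists O; intros; unfold R_dist; rewrite Rminus_diag, Rabs_R0; lra. Qed.
Lemma cv_squeeze0 : forall u a, (forall j, 0 <= u j <= a j) -> Un_cv a 0 -> Un_cv u 0.
Proof. intros u a H Ha e He; destruct (Ha e He) as [N HN]; exists N; intros j Hj; specialize (HN j Hj); specialize (H j).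
 unfold R_dist in *; rewrite Rminus_0_r in *. rewrite Rabs_right in * by lra. lra. Qed.
Lemma cv_squeeze0_ev : forall u a, (exists N, forall j, (N <= j)%nat -> 0 <= u j <= a j) -> Un_cv a 0 -> Un_cv u 0.
Proof. intros u a [M H] Ha e He; destruct (Ha e He) as [N HN]; exists (max N M); intros j Hj; specialize (HN j ltac:(lia)); specialize (H j ltac:(lia)).
 unfold R_dist in *; rewrite Rminus_0_r in *. rewrite Rabs_right in * by lra. lra. Qed.
Lemma incr_ge : forall s : nat -> nat, (forall k, (s k < s (S k))%nat) -> forall k, (k <= s k)%nat.
Proof. intros s H; induction k; [lia|]. specialize (H k). lia. Qed.
Lemma incr_mono : forall s : nat -> nat, (forall k, (s k < s (S k))%nat) -> forall k k', (k <= k')%nat -> (s k <= s k')%nat.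
Proof. intros s H k k' Hk; induction Hk; auto. specialize (H m); lia. Qed.
Lemma sub_cv : forall u l (s : nat -> nat), Un_cv u l -> (forall k, (k <= s k)%nat) -> Un_cv (fun k => u (s k)) l.
Proof. intros u l s H Hs e He; destruct (H e He) as [N HN]; exists N; intros; apply HN; specialize (Hs n); lia. Qed.
Lemma cv_le_ev : forall a b la lb, (exists N, forall j, (N <= j)%nat -> a j <= b j) -> Un_cv a la -> Un_cv b lb -> la <= lb.
Proof. intros a b la lb [N H] Ha Hb. apply (@Rle_cv_lim (fun j => a (j + N)%nat) (fun j => b (j + N)%nat)).
 intros; apply H; lia. apply CV_shift'; auto. apply CV_shift'; auto. Qed.
Lemma fin_bounded : forall (u : nat -> R) N, exists M, forall j, (j <= N)%nat -> Rabs (u j) <= M.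
Proof. intros u; induction N. exists (Rabs (u O)); intros j Hj; replace j with O by lia; lra.
 destruct IHN as [M HM]. exists (Rmax M (Rabs (u (S N)))); intros j Hj.
 destruct (Nat.eq_dec j (S N)). subst; apply Rmax_r. eapply Rle_trans; [apply HM; lia|apply Rmax_l]. Qed.
Lemma cv_bounded : forall u l, Un_cv u l -> exists M, forall j, Rabs (u j) <= M.
Proof. intros u l H. destruct (H 1 ltac:(lra)) as [N HN].
 destruct (fin_bounded u N) as [M HM].
 exists (Rmax M (Rabs l + 1)); intros j. destruct (Compare_dec.le_lt_dec j N). eapply Rle_trans; [apply HM; lia|apply Rmax_l].
 specialize (HN j ltac:(lia)). unfold R_dist in HN. eapply Rle_trans; [|apply Rmax_r].
 pose proof (Rabs_triang_inv (u j) l). lra. Qed.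
Lemma abs_le : forall a b, Rabs a <= b -> -b <= a <= b.
Proof. intros a b; unfold Rabs; destruct (Rcase_abs a); lra. Qed.
Lemma abs_lt : forall a b, Rabs a < b -> -b < a < b.
Proof. intros a b; unfold Rabs; destruct (Rcase_abs a); lra. Qed.
Lemma abs_le_i : forall a b, -b <= a <= b -> Rabs a <= b.
Proof. intros a b; unfold Rabs; destruct (Rcase_abs a); lra. Qed.
Lemma abs_lt_i : forall a b, -b < a < b -> Rabs a < b.
Proof. intros a b; unfold Rabs; destruct (Rcase_abs a); lra. Qed.

Definition incr (s : nat -> nat) : Prop := forall k, (s k < s (S k))%nat.

Lemma incr_strict : forall s, incr s -> forall a b, (a < b)%nat -> (s a < s b)%nat.
Proof. intros s H a b Hab; induction Hab. apply H. specialize (H m); lia. Qed.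
Lemma incr_comp : forall s t, incr s -> incr t -> incr (fun k => s (t k)).
Proof. intros s t Hs Ht k; apply incr_strict; auto. Qed.
Lemma incr_ge' : forall s, incr s -> forall k, (k <= s k)%nat.
Proof. intros; apply incr_ge; auto. Qed.

Lemma inv_small : forall e, 0 < e -> exists K, forall k, (K <= k)%nat -> / (INR k + 1) < e.
Proof. intros e He. destruct (archimed_cor1 e He) as [K [HK HK0]]. exists K; intros k Hk.
 assert (INR K <= INR k) by (apply le_INR; auto). assert (0 < INR K) by (apply lt_0_INR; auto).
 apply Rle_lt_trans with (/ INR K); auto. apply Rinv_le_contravar; lra. Qed.

Lemma BW1 : forall (u : nat -> R) M, (forall j, Rabs (u j) <= M) ->
  exists s l, incr s /\ Un_cv (fun k => u (s k)) l.
Proof. intros u M HM.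
 destruct (Bolzano_Weierstrass u (fun c => -M <= c <= M) (compact_P3 (-M) M)) as [l Hl].
 { intros j; specialize (HM j); apply abs_le in HM; lra. }
 assert (Hp : forall N k, exists p, (N <= p)%nat /\ Rabs (u p - l) < / (INR k + 1)).
 { intros N k. assert (Hpos : 0 < / (INR k + 1)) by (apply Rinv_0_lt_compat; pose proof (pos_INR k); lra).
   destruct (Hl (disc l (mkposreal _ Hpos)) N) as [p [Hp1 Hp2]].
   exists (mkposreal _ Hpos); intros y Hy; exact Hy. exists p; split; auto. }
 pose (pick := fun N k => proj1_sig (constructive_indefinite_description _ (Hp N k))).
 assert (Hpick : forall N k, (N <= pick N k)%nat /\ Rabs (u (pick N k) - l) < / (INR k + 1)).
 { intros; unfold pick; destruct (constructive_indefinite_description _ (Hp N k)); auto. }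
 pose (s := fix s k := match k with O => pick O O | S k => pick (S (s k)) (S k) end).
 exists s, l; split.
 - intros k; simpl. destruct (Hpick (S (s k)) (S k)); lia.
 - intros e He. destruct (inv_small e He) as [K HK]. exists K; intros k Hk. unfold R_dist.
   apply Rlt_trans with (/ (INR k + 1)); [|apply HK; auto].
   destruct k; simpl; apply Hpick. Qed.

Lemma BWk : forall K (w : nat -> nat -> R) M, (forall j i, (i < K)%nat -> Rabs (w j i) <= M) ->
  exists s z, incr s /\ forall i, (i < K)%nat -> Un_cv (fun k => w (s k) i) (z i).
Proof. induction K; intros w M HM.
 - exists (fun k => k), (fun _ => 0); split; [intros k; lia| intros; lia].
 - destruct (IHK w M) as [s [z [Hs Hz]]]. intros; apply HM; lia.
   destruct (BW1 (fun k => w (s k) K) M) as [s2 [l [Hs2 Hl]]]. intros; apply HM; lia.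
   exists (fun k => s (s2 k)), (fun i => if Nat.eqb i K then l else z i); split.
   + apply incr_comp; auto.
   + intros i Hi. destruct (Nat.eqb_spec i K).
     * subst; auto.
     * apply (sub_cv (fun k => w (s k) i)); [apply Hz; lia| apply incr_ge; auto]. Qed.

Lemma vdist_cv0 : forall n (ys : nat -> nat -> R) y,
  (forall i, (i < n)%nat -> Un_cv (fun k => ys k i) (y i)) -> Un_cv (fun k => vdist n (ys k) y) 0.
Proof. intros n ys y H. unfold vdist, vnorm. rewrite <- (rsum_zero n).
 apply (rsum_cv n (fun k i => Rabs (ys k i - y i)) (fun _ => 0)). intros i Hi; exact (proj1 (cv_abs0 _ _) (H i Hi)). Qed.

Lemma vdist_coord_cv : forall n (ys : nat -> nat -> R) y i, (i < n)%nat ->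
  Un_cv (fun k => vdist n (ys k) y) 0 -> Un_cv (fun k => ys k i) (y i).
Proof. intros n ys y i Hi H. apply cv_abs0. apply (cv_squeeze0 _ (fun k => vdist n (ys k) y)); auto.
 intros; split; [apply Rabs_pos| apply vdist_coord; auto]. Qed.

Lemma BWpt : forall n (ss : nat -> R) (ys : nat -> nat -> R) M,
  (forall j, Rabs (ss j) <= M) -> (forall j i, (i < n)%nat -> Rabs (ys j i) <= M) ->
  exists sg s0 y0, incr sg /\ vec n y0 /\ Un_cv (fun k => ss (sg k)) s0 /\
     Un_cv (fun k => vdist n (ys (sg k)) y0) 0.
Proof. intros n ss ys M H1 H2.
 destruct (BWk (S n) (fun j i => match i with O => ss j | S i => ys j i end) M) as [sg [z [Hsg Hz]]].
 { intros j [|i] Hi; auto. apply H2; lia. }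
 exists sg, (z O), (fun i => if Nat.ltb i n then z (S i) else 0). split; [auto|split;[|split]].
 - intros i Hi. destruct (Nat.ltb_spec i n); auto; lia.
 - apply (Hz O); lia.
 - apply vdist_cv0. intros i Hi. destruct (Nat.ltb_spec i n); [|lia]. apply (Hz (S i)); lia. Qed.

Lemma BWUV : forall U V (dU : U -> U -> R) (dV : V -> V -> R),
  compact_metric_space U dU -> compact_metric_space V dV ->
  forall (us : nat -> U) (vs : nat -> V), exists sg u v, incr sg /\
    Un_cv (fun k => dU (us (sg k)) u) 0 /\ Un_cv (fun k => dV (vs (sg k)) v) 0.
Proof. intros U V dU dV [_ [_ HU]] [_ [_ HV]] us vs.
 destruct (HU us) as [s1 [u [Hs1 Hu]]]. destruct (HV (fun k => vs (s1 k))) as [s2 [v [Hs2 Hv]]].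
 exists (fun k => s1 (s2 k)), u, v. split; [apply incr_comp; auto|split; auto].
 apply (sub_cv (fun k => dU (us (s1 k)) u)); auto. apply incr_ge; auto. Qed.

Lemma Rsup_spec : forall E, bound E -> (exists x, E x) -> is_lub E (Rsup E).
Proof. intros E Hb Hn. unfold Rsup. apply epsilon_spec. destruct (completeness E Hb Hn) as [m Hm]; exists m; auto. Qed.

Section SI.
Context {U V : Type}.
Definition infv (g : V -> R) := Rinf (fun z => exists v, z = g v).
Definition supu (k : U -> R) := Rsup (fun y => exists u, y = k u).

Lemma infv_le : forall g, inhabited V -> (exists M, forall v, M <= g v) -> forall v, infv g <= g v.
Proof. intros g [v0] [M HM] v. unfold infv, Rinf.
 pose proof (Rsup_spec (fun y => exists v, - y = g v)) as [H1 H2].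
 - exists (- M). intros y [w Hw]. specialize (HM w). lra.
 - exists (- g v0), v0. ring.
 - assert (- g v <= Rsup (fun y => exists v, - y = g v)) by (apply H1; exists v; ring). lra. Qed.
Lemma infv_ge : forall g c, inhabited V -> (exists M, forall v, M <= g v) -> (forall v, c <= g v) -> c <= infv g.
Proof. intros g c [v0] [M HM] Hc. unfold infv, Rinf.
 pose proof (Rsup_spec (fun y => exists v, - y = g v)) as [H1 H2].
 - exists (- M). intros y [w Hw]. specialize (HM w). lra.
 - exists (- g v0), v0. ring.
 - assert (Rsup (fun y => exists v, - y = g v) <= - c).
   { apply H2. intros y [w Hw]. specialize (Hc w). lra. } lra. Qed.
Lemma supu_ge : forall k, inhabited U -> (exists M, forall u, k u <= M) -> forall u, k u <= supu k.
Proof. intros k [u0] [M HM] u. unfold supu.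
 pose proof (Rsup_spec (fun y => exists u, y = k u)) as [H1 H2].
 - exists M. intros y [w Hw]. subst; auto.
 - exists (k u0), u0; auto.
 - apply H1; exists u; auto. Qed.
Lemma supu_le : forall k c, inhabited U -> (exists M, forall u, k u <= M) -> (forall u, k u <= c) -> supu k <= c.
Proof. intros k c [u0] [M HM] Hc. unfold supu.
 pose proof (Rsup_spec (fun y => exists u, y = k u)) as [H1 H2].
 - exists M. intros y [w Hw]. subst; auto.
 - exists (k u0), u0; auto.
 - apply H2. intros y [w Hw]; subst; auto. Qed.

Lemma supinf_eq : forall (G : U -> V -> R), supinf G = supu (fun u => infv (G u)).
Proof. reflexivity. Qed.

Lemma supinf_lip : forall (G G' : U -> V -> R) M e, inhabited U -> inhabited V ->
  (forall u v, Rabs (G u v) <= M) -> (forall u v, Rabs (G' u v) <= M) ->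
  (forall u v, Rabs (G u v - G' u v) <= e) -> Rabs (supinf G - supinf G') <= e.
Proof. intros G G' M e HU HV HG HG' He. rewrite !supinf_eq.
 assert (Hlb : forall (K : U -> V -> R), (forall u v, Rabs (K u v) <= M) -> forall u, exists m, forall v, m <= K u v).
 { intros K HK u; exists (-M); intros v; specialize (HK u v); apply abs_le in HK; lra. }
 assert (Hub : forall (K : U -> V -> R), (forall u v, Rabs (K u v) <= M) -> exists m, forall u, infv (K u) <= m).
 { intros K HK. pose proof HV as [v0]. exists M; intros u. apply Rle_trans with (K u v0); [apply infv_le; [auto| apply Hlb; auto]|].
   specialize (HK u v0); apply abs_le in HK; lra. }
 assert (Hone : forall (K K' : U -> V -> R), (forall u v, Rabs (K u v) <= M) -> (forall u v, Rabs (K' u v) <= M) ->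
   (forall u v, Rabs (K u v - K' u v) <= e) -> supu (fun u => infv (K u)) <= supu (fun u => infv (K' u)) + e).
 { intros K K' HK HK' HKe. assert (supu (fun u => infv (K u)) - e <= supu (fun u => infv (K' u))); [|lra].
   cut (supu (fun u => infv (K u)) <= supu (fun u => infv (K' u)) + e); [lra|].
   apply supu_le; auto. intros u.
   assert (infv (K u) - e <= infv (K' u)).
   { apply infv_ge; auto. intros v. pose proof (infv_le (K u) HV (Hlb K HK u) v). specialize (HKe u v); apply abs_le in HKe; lra. }
   assert (infv (K' u) <= supu (fun u => infv (K' u))) by (apply (supu_ge (fun u => infv (K' u))); auto). lra. }
 apply abs_le_i. split.
 - pose proof (Hone G' G HG' HG ltac:(intros u v; rewrite Rabs_minus_sym; auto)). lra.
 - pose proof (Hone G G' HG HG' He). lra. Qed.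

Lemma supinf_shift : forall (G : U -> V -> R) M c, inhabited U -> inhabited V ->
  (forall u v, Rabs (G u v) <= M) -> supinf (fun u v => G u v + c) = supinf G + c.
Proof. intros G M c HU HV HG. rewrite !supinf_eq.
 assert (Hlb : forall u, exists m, forall v, m <= G u v).
 { intros u; exists (-M); intros v; specialize (HG u v); apply abs_le in HG; lra. }
 assert (Hi : forall u, infv (fun v => G u v + c) = infv (G u) + c).
 { intros u. destruct (Hlb u) as [m Hm]. apply Rle_antisym.
   - assert (Hb : exists M, forall v, M <= G u v + c) by (exists (m + c); intros w; specialize (Hm w); lra).
     cut (infv (fun v => G u v + c) - c <= infv (G u)); [lra|]. apply infv_ge; [auto|apply Hlb|].
     intros v. pose proof (infv_le (fun v => G u v + c) HV Hb v). simpl in H. lra.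
   - apply infv_ge; auto. exists (m + c); intros; specialize (Hm v); lra.
     intros v. pose proof (infv_le (G u) HV (Hlb u) v). lra. }
 rewrite (functional_extensionality _ _ Hi).
 assert (Hub : exists m, forall u, infv (G u) <= m).
 { pose proof HV as [v0]. exists M; intros u. apply Rle_trans with (G u v0); [apply infv_le; [auto|apply Hlb]|].
   specialize (HG u v0); apply abs_le in HG; lra. }
 destruct Hub as [m Hm].
 apply Rle_antisym.
 - apply supu_le; auto. exists (m + c); intros; specialize (Hm u); lra.
   intros u. pose proof (supu_ge (fun u => infv (G u)) HU ltac:(exists m; auto) u). simpl in H; lra.
 - cut (supu (fun u => infv (G u)) <= supu (fun u => infv (G u) + c) - c); [lra|].
   apply supu_le; auto. exists m; auto. intros u.
   assert (Hb : exists M, forall u, infv (G u) + c <= M) by (exists (m + c); intros w; specialize (Hm w); lra).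
   pose proof (supu_ge (fun u => infv (G u) + c) HU Hb u). simpl in H; lra. Qed.
End SI.

Lemma nat_large : forall B, exists k, B < INR k.
Proof. intros B. assert (He : 0 < / (Rabs B + 1)) by (apply Rinv_0_lt_compat; pose proof (Rabs_pos B); lra).
 destruct (inv_small _ He) as [K HK]. exists K. specialize (HK K (le_n K)).
 pose proof (RRle_abs B). pose proof (pos_INR K). destruct (Rlt_or_le B (INR K)); auto.
 assert (/ (Rabs B + 1) <= / (INR K + 1)) by (apply Rinv_le_contravar; lra). lra. Qed.

Section UV.
Context {U V : Type} (dU : U -> U -> R) (dV : V -> V -> R).
Hypothesis HU : compact_metric_space U dU.
Hypothesis HV : compact_metric_space V dV.

Definition SCs (Gs : nat -> U -> V -> R) (G : U -> V -> R) : Prop :=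
  forall (sg : nat -> nat) us u vs v, (forall k, (k <= sg k)%nat) ->
    Un_cv (fun k => dU (us k) u) 0 -> Un_cv (fun k => dV (vs k) v) 0 ->
    Un_cv (fun k => Gs (sg k) (us k) (vs k)) (G u v).

Lemma SC_bounded : forall G, SCs (fun _ => G) G -> exists M, forall u v, Rabs (G u v) <= M.
Proof. intros G HG. apply NNPP; intros Hn.
 assert (Hp : forall j : nat, exists p : U * V, INR j < Rabs (G (fst p) (snd p))).
 { intros j. apply NNPP; intros Hj. apply Hn. exists (INR j). intros u v. apply Rnot_lt_le. intros Hl. apply Hj. exists (u, v); auto. }
 pose (ps := fun j => proj1_sig (constructive_indefinite_description _ (Hp j))).
 assert (Hps : forall j, INR j < Rabs (G (fst (ps j)) (snd (ps j)))).
 { intros j; unfold ps; destruct (constructive_indefinite_description _ (Hp j)); auto. }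
 destruct (BWUV U V dU dV HU HV (fun j => fst (ps j)) (fun j => snd (ps j))) as [sg [u [v [Hsg [Hu Hv]]]]].
 pose proof (HG (fun k => k) _ u _ v (fun k => le_n k) Hu Hv) as Hc. simpl in Hc.
 destruct (cv_bounded _ _ Hc) as [B HB]. destruct (nat_large B) as [k Hk].
 specialize (HB k). specialize (Hps (sg k)). pose proof (incr_ge' sg Hsg k).
 apply le_INR in H. lra. Qed.

Lemma SC_unif : forall Gs G, SCs Gs G -> SCs (fun _ => G) G ->
  forall e, 0 < e -> exists N, forall j, (N <= j)%nat -> forall u v, Rabs (Gs j u v - G u v) < e.
Proof. intros Gs G HGs HG e He. apply NNPP; intros Hn.
 assert (Hp : forall N : nat, exists p : nat * (U * V), (N <= fst p)%nat /\
    e <= Rabs (Gs (fst p) (fst (snd p)) (snd (snd p)) - G (fst (snd p)) (snd (snd p)))).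
 { intros N. apply NNPP; intros HN. apply Hn. exists N. intros j Hj u v. apply Rnot_le_lt. intros Hl. apply HN.
   exists (j, (u, v)); simpl; auto. }
 pose (ps := fun j => proj1_sig (constructive_indefinite_description _ (Hp j))).
 assert (Hps : forall N, (N <= fst (ps N))%nat /\ e <= Rabs (Gs (fst (ps N)) (fst (snd (ps N))) (snd (snd (ps N))) - G (fst (snd (ps N))) (snd (snd (ps N))))).
 { intros j; unfold ps; destruct (constructive_indefinite_description _ (Hp j)); auto. }
 destruct (BWUV U V dU dV HU HV (fun j => fst (snd (ps j))) (fun j => snd (snd (ps j)))) as [sg [u [v [Hsg [Hu Hv]]]]].
 assert (Hge : forall k, (k <= fst (ps (sg k)))%nat).
 { intros k. pose proof (incr_ge' sg Hsg k). destruct (Hps (sg k)). lia. }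
 pose proof (HGs (fun k => fst (ps (sg k))) _ u _ v Hge Hu Hv) as H1.
 pose proof (HG (fun k => k) _ u _ v (fun k => le_n k) Hu Hv) as H2. simpl in H1, H2.
 pose proof (CV_minus _ _ _ _ H1 H2) as H3. rewrite Rminus_diag in H3.
 destruct (H3 e He) as [N HN]. specialize (HN N (le_n N)). unfold R_dist in HN. rewrite Rminus_0_r in HN.
 destruct (Hps (sg N)) as [_ HH]. lra. Qed.
End UV.

Lemma cont_to_seq : forall {U V : Type} (dU : U -> U -> R) (dV : V -> V -> R)
 (D : R -> U -> V -> R) T t u v ts us vs,
 (forall k, 0 <= ts k <= T) -> Un_cv ts t -> Un_cv (fun k => dU (us k) u) 0 -> Un_cv (fun k => dV (vs k) v) 0 ->
 (forall k, 0 <= D (ts k) (us k) (vs k)) ->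
 (forall eps, eps > 0 -> exists del, del > 0 /\ forall t' u' v', 0 <= t' <= T -> Rabs (t' - t) < del ->
     dU u' u < del -> dV v' v < del -> D t' u' v' < eps) ->
 Un_cv (fun k => D (ts k) (us k) (vs k)) 0.
Proof. intros U V dU dV D T t u v ts us vs Hts Ht Hu Hv HD Hc e He.
 destruct (Hc e He) as [del [Hdel H]].
 destruct (Ht del Hdel) as [N1 H1]. destruct (Hu del Hdel) as [N2 H2]. destruct (Hv del Hdel) as [N3 H3].
 exists (max N1 (max N2 N3)); intros k Hk. unfold R_dist in *. rewrite Rminus_0_r. rewrite Rabs_right by (apply Rle_ge; auto).
 apply H; auto. apply H1; lia.
 specialize (H2 k ltac:(lia)). rewrite Rminus_0_r in H2. pose proof (RRle_abs (dU (us k) u)). lra.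
 specialize (H3 k ltac:(lia)). rewrite Rminus_0_r in H3. pose proof (RRle_abs (dV (vs k) v)). lra. Qed.

Lemma cv_of_bound : forall (a : nat -> R) l (c : nat -> R), (forall k, Rabs (a k - l) <= c k) -> Un_cv c 0 -> Un_cv a l.
Proof. intros a l c H Hc. apply cv_abs0. apply (cv_squeeze0 _ c); auto. intros; split; [apply Rabs_pos|auto]. Qed.

Lemma cv_lin2 : forall L (a b : nat -> R), Un_cv a 0 -> Un_cv b 0 -> Un_cv (fun k => L * a k + b k) 0.
Proof. intros. replace 0 with (L * 0 + 0) by ring. apply CV_plus; auto. apply CV_mult; auto. apply cv_const. Qed.

Lemma qsig_vec : forall n d q s, vec d (qsig n d q s).
Proof. intros n d q s k Hk. unfold qsig. destruct (Nat.ltb_spec k d); auto; lia. Qed.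

Section HSC.
Context {U V : Type} (dU : U -> U -> R) (dV : V -> V -> R) (T : R) (n d : nat)
  (b : R -> (nat -> R) -> U -> V -> (nat -> R))
  (sig : R -> (nat -> R) -> U -> V -> nat -> nat -> R)
  (f : R -> (nat -> R) -> R -> (nat -> R) -> U -> V -> R).
Hypothesis Hbc : forall x, vec n x -> forall t u v, 0 <= t <= T -> forall eps, eps > 0 ->
     exists del, del > 0 /\ forall t' u' v', 0 <= t' <= T -> Rabs (t' - t) < del ->
       dU u' u < del -> dV v' v < del ->
       vdist n (b t' x u' v') (b t x u v) < eps /\
       mdist n d (sig t' x u' v') (sig t x u v) < eps.
Variable Lb : R.
Hypothesis Hbl : forall t x x' u v, 0 <= t <= T -> vec n x -> vec n x' ->
     vdist n (b t x u v) (b t x' u v) <= Lb * vdist n x x' /\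
     mdist n d (sig t x u v) (sig t x' u v) <= Lb * vdist n x x'.
Hypothesis Hfc : forall x y z, vec n x -> vec d z -> forall t u v, 0 <= t <= T -> forall eps, eps > 0 ->
     exists del, del > 0 /\ forall t' u' v', 0 <= t' <= T -> Rabs (t' - t) < del ->
       dU u' u < del -> dV v' v < del ->
       Rabs (f t' x y z u' v' - f t x y z u v) < eps.
Variable Lf : R.
Hypothesis Hfl : forall t x x' y y' z z' u v, 0 <= t <= T -> vec n x -> vec n x' ->
     vec d z -> vec d z' ->
     Rabs (f t x y z u v - f t x' y' z' u v)
       <= Lf * (vdist n x x' + Rabs (y - y') + vdist d z z').

Variables (ts : nat -> R) (xs : nat -> nat -> R) (ys : nat -> R) (qs : nat -> nat -> R) (Xs : nat -> nat -> nat -> R)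
  (t : R) (x : nat -> R) (y : R) (q : nat -> R) (X : nat -> nat -> R).
Hypotheses (Ht : 0 <= t <= T) (Hx : vec n x) (Hts : forall j, 0 <= ts j <= T) (Hxs : forall j, vec n (xs j))
  (Ctv : Un_cv ts t) (Cx : Un_cv (fun j => vdist n (xs j) x) 0) (Cy : Un_cv ys y)
  (Cq : forall i, (i < n)%nat -> Un_cv (fun j => qs j i) (q i))
  (CX : forall i i', (i < n)%nat -> (i' < n)%nat -> Un_cv (fun j => Xs j i i') (X i i')).

Lemma Hinner_SC : SCs dU dV (fun j u v => Hinner n d b sig f (ts j) (xs j) (ys j) (qs j) (Xs j) u v)
  (fun u v => Hinner n d b sig f t x y q X u v).
Proof. intros sg us u vs v Hsg Hu Hv.
 assert (Ct : Un_cv (fun k => ts (sg k)) t) by (apply sub_cv; auto).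
 assert (Cx' : Un_cv (fun k => vdist n (xs (sg k)) x) 0) by (apply (sub_cv (fun j => vdist n (xs j) x)); auto).
 assert (Cy' : Un_cv (fun k => ys (sg k)) y) by (apply sub_cv; auto).
 assert (Cq' : forall i, (i < n)%nat -> Un_cv (fun k => qs (sg k) i) (q i)) by (intros; apply (sub_cv (fun j => qs j i)); auto).
 assert (CX' : forall i i', (i < n)%nat -> (i' < n)%nat -> Un_cv (fun k => Xs (sg k) i i') (X i i')) by (intros; apply (sub_cv (fun j => Xs j i i')); auto).
 assert (Cb : Un_cv (fun k => vdist n (b (ts (sg k)) x (us k) (vs k)) (b t x u v)) 0).
 { apply (cont_to_seq dU dV (fun t' u' v' => vdist n (b t' x u' v') (b t x u v)) T t u v); auto.
   intros; apply vdist_nonneg. intros e He. destruct (Hbc x Hx t u v Ht e He) as [del [Hd H]]. exists del; split; auto.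
   intros; apply H; auto. }
 assert (Cs : Un_cv (fun k => mdist n d (sig (ts (sg k)) x (us k) (vs k)) (sig t x u v)) 0).
 { apply (cont_to_seq dU dV (fun t' u' v' => mdist n d (sig t' x u' v') (sig t x u v)) T t u v); auto.
   intros; apply mdist_nonneg. intros e He. destruct (Hbc x Hx t u v Ht e He) as [del [Hd H]]. exists del; split; auto.
   intros; apply H; auto. }
 assert (Bi : forall i, (i < n)%nat -> Un_cv (fun k => b (ts (sg k)) (xs (sg k)) (us k) (vs k) i) (b t x u v i)).
 { intros i Hi. apply (cv_of_bound _ _ (fun k => Lb * vdist n (xs (sg k)) x + vdist n (b (ts (sg k)) x (us k) (vs k)) (b t x u v))).
   2: apply cv_lin2; auto.
   intros k. eapply Rle_trans; [apply (vdist_coord n _ _ i Hi)|].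
   eapply Rle_trans; [apply (vdist_tri n _ (b (ts (sg k)) x (us k) (vs k)))|].
   destruct (Hbl (ts (sg k)) (xs (sg k)) x (us k) (vs k)); auto. lra. }
 assert (Si : forall i kk, (i < n)%nat -> (kk < d)%nat -> Un_cv (fun k => sig (ts (sg k)) (xs (sg k)) (us k) (vs k) i kk) (sig t x u v i kk)).
 { intros i kk Hi Hkk. apply (cv_of_bound _ _ (fun k => Lb * vdist n (xs (sg k)) x + mdist n d (sig (ts (sg k)) x (us k) (vs k)) (sig t x u v))).
   2: apply cv_lin2; auto.
   intros k. eapply Rle_trans; [apply (mdist_coord n d _ _ i kk Hi Hkk)|].
   destruct (Hbl (ts (sg k)) (xs (sg k)) x (us k) (vs k)); auto.
   assert (forall A B C : nat -> nat -> R, mdist n d A C <= mdist n d A B + mdist n d B C).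
   { intros A B C. unfold mdist. rewrite <- rsum_plus. apply rsum_le_mono; intros. rewrite <- rsum_plus. apply rsum_le_mono; intros.
     replace (A i0 i1 - C i0 i1) with ((A i0 i1 - B i0 i1) + (B i0 i1 - C i0 i1)) by ring. apply Rabs_triang. }
   pose proof (H1 (sig (ts (sg k)) (xs (sg k)) (us k) (vs k)) (sig (ts (sg k)) x (us k) (vs k)) (sig t x u v)). lra. }
 set (zk := fun k => qsig n d (qs (sg k)) (sig (ts (sg k)) (xs (sg k)) (us k) (vs k))).
 set (z := qsig n d q (sig t x u v)).
 assert (Cz : Un_cv (fun k => vdist d (zk k) z) 0).
 { apply vdist_cv0. intros kk Hkk. unfold zk, z, qsig. destruct (Nat.ltb_spec kk d); [|lia].
   apply (rsum_cv n (fun k i => qs (sg k) i * sig (ts (sg k)) (xs (sg k)) (us k) (vs k) i kk)).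
   intros i Hi. apply CV_mult; auto. }
 assert (Cf0 : Un_cv (fun k => Rabs (f (ts (sg k)) x y z (us k) (vs k) - f t x y z u v)) 0).
 { apply (cont_to_seq dU dV (fun t' u' v' => Rabs (f t' x y z u' v' - f t x y z u v)) T t u v); auto.
   intros; apply Rabs_pos. intros e He. apply (Hfc x y z Hx (qsig_vec n d q _) t u v Ht e He). }
 assert (Cf : Un_cv (fun k => f (ts (sg k)) (xs (sg k)) (ys (sg k)) (zk k) (us k) (vs k)) (f t x y z u v)).
 { apply (cv_of_bound _ _ (fun k => Lf * (vdist n (xs (sg k)) x + Rabs (ys (sg k) - y) + vdist d (zk k) z) + Rabs (f (ts (sg k)) x y z (us k) (vs k) - f t x y z u v))).
   - intros k. replace (f (ts (sg k)) (xs (sg k)) (ys (sg k)) (zk k) (us k) (vs k) - f t x y z u v)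
       with ((f (ts (sg k)) (xs (sg k)) (ys (sg k)) (zk k) (us k) (vs k) - f (ts (sg k)) x y z (us k) (vs k)) + (f (ts (sg k)) x y z (us k) (vs k) - f t x y z u v)) by ring.
     eapply Rle_trans; [apply Rabs_triang|]. apply Rplus_le_compat_r. apply Hfl; auto; apply qsig_vec.
   - apply cv_lin2; auto. replace 0 with (0 + 0 + 0) by ring. apply CV_plus; [apply CV_plus|]; auto.
     apply (proj1 (cv_abs0 _ _)); auto. }
 unfold Hinner. apply CV_plus; [apply CV_plus|].
 - apply CV_mult; [apply cv_const|]. unfold trace_term.
   apply (rsum_cv n (fun k i => rsum n (fun j => rsum d (fun kk => sig (ts (sg k)) (xs (sg k)) (us k) (vs k) i kk * sig (ts (sg k)) (xs (sg k)) (us k) (vs k) j kk) * Xs (sg k) j i))).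
   intros i Hi. apply (rsum_cv n (fun k j => rsum d (fun kk => sig (ts (sg k)) (xs (sg k)) (us k) (vs k) i kk * sig (ts (sg k)) (xs (sg k)) (us k) (vs k) j kk) * Xs (sg k) j i)).
   intros j Hj. apply CV_mult; auto.
   apply (rsum_cv d (fun k kk => sig (ts (sg k)) (xs (sg k)) (us k) (vs k) i kk * sig (ts (sg k)) (xs (sg k)) (us k) (vs k) j kk)).
   intros kk Hkk; apply CV_mult; auto.
 - unfold dotv. apply (rsum_cv n (fun k i => qs (sg k) i * b (ts (sg k)) (xs (sg k)) (us k) (vs k) i)).
   intros i Hi; apply CV_mult; auto.
 - exact Cf. Qed.
End HSC.

Section HM.
Context {U V : Type} (dU : U -> U -> R) (dV : V -> V -> R) (T : R) (n d : nat)
  (b : R -> (nat -> R) -> U -> V -> (nat -> R))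
  (sig : R -> (nat -> R) -> U -> V -> nat -> nat -> R)
  (f : R -> (nat -> R) -> R -> (nat -> R) -> U -> V -> R).
Hypothesis HU : compact_metric_space U dU.
Hypothesis HV : compact_metric_space V dV.
Hypothesis Hbc : forall x, vec n x -> forall t u v, 0 <= t <= T -> forall eps, eps > 0 ->
     exists del, del > 0 /\ forall t' u' v', 0 <= t' <= T -> Rabs (t' - t) < del ->
       dU u' u < del -> dV v' v < del ->
       vdist n (b t' x u' v') (b t x u v) < eps /\
       mdist n d (sig t' x u' v') (sig t x u v) < eps.
Variable Lb : R.
Hypothesis Hbl : forall t x x' u v, 0 <= t <= T -> vec n x -> vec n x' ->
     vdist n (b t x u v) (b t x' u v) <= Lb * vdist n x x' /\
     mdist n d (sig t x u v) (sig t x' u v) <= Lb * vdist n x x'.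
Hypothesis Hfc : forall x y z, vec n x -> vec d z -> forall t u v, 0 <= t <= T -> forall eps, eps > 0 ->
     exists del, del > 0 /\ forall t' u' v', 0 <= t' <= T -> Rabs (t' - t) < del ->
       dU u' u < del -> dV v' v < del ->
       Rabs (f t' x y z u' v' - f t x y z u v) < eps.
Variable Lf : R.
Hypothesis Hfl : forall t x x' y y' z z' u v, 0 <= t <= T -> vec n x -> vec n x' ->
     vec d z -> vec d z' ->
     Rabs (f t x y z u v - f t x' y' z' u v)
       <= Lf * (vdist n x x' + Rabs (y - y') + vdist d z z').

Lemma Hinner_SC_const : forall t x y q X, 0 <= t <= T -> vec n x ->
  SCs dU dV (fun _ u v => Hinner n d b sig f t x y q X u v) (fun u v => Hinner n d b sig f t x y q X u v).
Proof. intros t x y q X Ht Hx.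
 apply (Hinner_SC dU dV T n d b sig f Hbc Lb Hbl Hfc Lf Hfl (fun _ => t) (fun _ => x) (fun _ => y) (fun _ => q) (fun _ => X)); auto.
 apply cv_const. rewrite <- (vdist_self n x). apply cv_const. apply cv_const. intros; apply cv_const. intros; apply cv_const. Qed.

Lemma Hinner_bounded : forall t x y q X, 0 <= t <= T -> vec n x ->
  exists M, forall u v, Rabs (Hinner n d b sig f t x y q X u v) <= M.
Proof. intros. apply (SC_bounded dU dV HU HV). apply Hinner_SC_const; auto. Qed.

Lemma Hpen_shift : forall h m t x y q X, 0 <= t <= T -> vec n x ->
  @Hpen U V n d b sig f h m t x y q X = @Hminus U V n d b sig f t x y q X + INR m * negpart (y - h t x).
Proof. intros h m t x y q X Ht Hx. destruct (Hinner_bounded t x y q X Ht Hx) as [M HM].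
 unfold Hpen, Hminus. apply (supinf_shift _ M); auto. destruct HU as [? _]; auto. destruct HV as [? _]; auto. Qed.

Lemma Hminus_cv : forall (ts : nat -> R) (xs : nat -> nat -> R) (ys : nat -> R) (qs : nat -> nat -> R) (Xs : nat -> nat -> nat -> R)
  (t : R) (x : nat -> R) (y : R) (q : nat -> R) (X : nat -> nat -> R),
  0 <= t <= T -> vec n x -> (forall j, 0 <= ts j <= T) -> (forall j, vec n (xs j)) ->
  Un_cv ts t -> Un_cv (fun j => vdist n (xs j) x) 0 -> Un_cv ys y ->
  (forall i, (i < n)%nat -> Un_cv (fun j => qs j i) (q i)) ->
  (forall i i', (i < n)%nat -> (i' < n)%nat -> Un_cv (fun j => Xs j i i') (X i i')) ->
  Un_cv (fun j => @Hminus U V n d b sig f (ts j) (xs j) (ys j) (qs j) (Xs j)) (@Hminus U V n d b sig f t x y q X).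
Proof. intros ts xs ys qs Xs t x y q X Ht Hx Hts Hxs Ct Cx Cy Cq CX.
 pose proof (Hinner_SC dU dV T n d b sig f Hbc Lb Hbl Hfc Lf Hfl ts xs ys qs Xs t x y q X Ht Hx Hts Hxs Ct Cx Cy Cq CX) as HS.
 pose proof (Hinner_SC_const t x y q X Ht Hx) as HS0.
 destruct (Hinner_bounded t x y q X Ht Hx) as [M HM].
 intros e He. destruct (SC_unif dU dV HU HV _ _ HS HS0 (Rmin (e/2) 1)) as [N HN].
 { apply Rmin_pos; lra. }
 exists N; intros j Hj. unfold R_dist, Hminus.
 apply Rle_lt_trans with (Rmin (e/2) 1); [|pose proof (Rmin_l (e/2) 1); lra].
 apply (supinf_lip _ _ (M + 1)). destruct HU as [? _]; auto. destruct HV as [? _]; auto.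
 - intros u v. specialize (HN j Hj u v). specialize (HM u v). pose proof (Rmin_r (e/2) 1).
   pose proof (Rabs_triang_inv (Hinner n d b sig f (ts j) (xs j) (ys j) (qs j) (Xs j) u v) (Hinner n d b sig f t x y q X u v)). lra.
 - intros u v; specialize (HM u v); lra.
 - intros u v; specialize (HN j Hj u v); lra. Qed.
End HM.

Lemma dpl_eq : forall f g x l l', (forall z, f z = g z) -> l = l' -> derivable_pt_lim f x l -> derivable_pt_lim g x l'.
Proof. intros f g x l l' Hfg Hl H. replace g with f by (apply functional_extensionality; auto). subst; auto. Qed.

Definition G0 z := (1 - cos z) * (1 - cos z).
Definition G1 z := 2 * (1 - cos z) * sin z.
Definition G2 z := 2 * (sin z * sin z) + 2 * (1 - cos z) * cos z.
Definition G3 z := 8 * sin z * cos z - 2 * sin z.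
Definition G4 z := 8 * (cos z * cos z - sin z * sin z) - 2 * cos z.

Lemma d_omc : forall z, derivable_pt_lim (fct_cte 1 - cos)%F z (0 - - sin z).
Proof. intros; apply derivable_pt_lim_minus; [apply derivable_pt_lim_const| apply derivable_pt_lim_cos]. Qed.

Lemma dG0 : forall z, derivable_pt_lim G0 z (G1 z).
Proof. intros z. eapply dpl_eq; [| |apply (derivable_pt_lim_mult _ _ z _ _ (d_omc z) (d_omc z))].
 intros; unfold G0, mult_fct, minus_fct, fct_cte; ring. unfold G1, mult_fct, minus_fct, fct_cte; ring. Qed.
Lemma dG1 : forall z, derivable_pt_lim G1 z (G2 z).
Proof. intros z. eapply dpl_eq; [| |apply (derivable_pt_lim_mult _ _ z _ _ (derivable_pt_lim_mult _ _ z _ _ (derivable_pt_lim_const 2 z) (d_omc z)) (derivable_pt_lim_sin z))].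
 intros; unfold G1, mult_fct, minus_fct, fct_cte; ring. unfold G2, mult_fct, minus_fct, fct_cte; ring. Qed.
Lemma dG2 : forall z, derivable_pt_lim G2 z (G3 z).
Proof. intros z. eapply dpl_eq; [| |apply (derivable_pt_lim_plus _ _ z _ _
   (derivable_pt_lim_mult _ _ z _ _ (derivable_pt_lim_const 2 z) (derivable_pt_lim_mult _ _ z _ _ (derivable_pt_lim_sin z) (derivable_pt_lim_sin z)))
   (derivable_pt_lim_mult _ _ z _ _ (derivable_pt_lim_mult _ _ z _ _ (derivable_pt_lim_const 2 z) (d_omc z)) (derivable_pt_lim_cos z)))].
 intros; unfold G2, plus_fct, mult_fct, minus_fct, fct_cte; ring. unfold G3, plus_fct, mult_fct, minus_fct, fct_cte; ring. Qed.
Lemma dG3 : forall z, derivable_pt_lim G3 z (G4 z).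
Proof. intros z. eapply dpl_eq; [| |apply (derivable_pt_lim_minus _ _ z _ _
   (derivable_pt_lim_mult _ _ z _ _ (derivable_pt_lim_mult _ _ z _ _ (derivable_pt_lim_const 8 z) (derivable_pt_lim_sin z)) (derivable_pt_lim_cos z))
   (derivable_pt_lim_mult _ _ z _ _ (derivable_pt_lim_const 2 z) (derivable_pt_lim_sin z)))].
 intros; unfold G3, mult_fct, minus_fct, fct_cte; ring. unfold G4, mult_fct, minus_fct, fct_cte; ring. Qed.

Lemma cont_of_d : forall g g', (forall z, derivable_pt_lim g z (g' z)) ->
  forall z eps, eps > 0 -> exists del, del > 0 /\ forall w, Rabs (w - z) < del -> Rabs (g w - g z) < eps.
Proof. intros g g' Hd z eps He. assert (Hc : continuity_pt g z) by (apply derivable_continuous_pt; exact (exist _ (g' z) (Hd z))).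
 destruct (Hc eps He) as [alp [Ha H]]. exists alp; split; auto. intros w Hw.
 destruct (Req_dec w z). subst; rewrite Rminus_diag, Rabs_R0; lra.
 apply (H w). split. split; [exact I|auto]. simpl. unfold R_dist; auto. Qed.

Lemma abs_mul_le : forall a b A B, Rabs a <= A -> Rabs b <= B -> Rabs (a * b) <= A * B.
Proof. intros. rewrite Rabs_mult. apply Rmult_le_compat; auto; apply Rabs_pos. Qed.
Lemma sin_abs : forall z, Rabs (sin z) <= 1.
Proof. intros; apply abs_le_i; apply SIN_bound. Qed.
Lemma cos_abs : forall z, Rabs (cos z) <= 1.
Proof. intros; apply abs_le_i; apply COS_bound. Qed.
Lemma omc_abs : forall z, Rabs (1 - cos z) <= 2.
Proof. intros; apply abs_le_i; pose proof (COS_bound z); lra. Qed.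
Lemma two_abs : Rabs 2 <= 2.
Proof. rewrite Rabs_right; lra. Qed.
Lemma G1_bound : forall z, Rabs (G1 z) <= 10.
Proof. intros; unfold G1. pose proof (abs_mul_le _ _ _ _ (abs_mul_le _ _ _ _ two_abs (omc_abs z)) (sin_abs z)). lra. Qed.
Lemma G2_bound : forall z, Rabs (G2 z) <= 10.
Proof. intros; unfold G2. pose proof (abs_mul_le _ _ _ _ two_abs (abs_mul_le _ _ _ _ (sin_abs z) (sin_abs z))).
 pose proof (abs_mul_le _ _ _ _ (abs_mul_le _ _ _ _ two_abs (omc_abs z)) (cos_abs z)).
 eapply Rle_trans; [apply Rabs_triang|]. lra. Qed.
Lemma G3_bound : forall z, Rabs (G3 z) <= 10.
Proof. intros; unfold G3. assert (Rabs 8 <= 8) by (rewrite Rabs_right; lra).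
 pose proof (abs_mul_le _ _ _ _ (abs_mul_le _ _ _ _ H (sin_abs z)) (cos_abs z)).
 pose proof (abs_mul_le _ _ _ _ two_abs (sin_abs z)).
 unfold Rminus. eapply Rle_trans; [apply Rabs_triang|]. rewrite Rabs_Ropp. lra. Qed.
Lemma G0_nonneg : forall z, 0 <= G0 z.
Proof. intros; unfold G0. pose proof (Rle_0_sqr (1 - cos z)); unfold Rsqr in *; lra. Qed.
Lemma G1_0 : G1 0 = 0.
Proof. unfold G1; rewrite sin_0; ring. Qed.
Lemma G2_0 : G2 0 = 0.
Proof. unfold G2; rewrite sin_0, cos_0; ring. Qed.
Lemma G0_0 : G0 0 = 0.
Proof. unfold G0; rewrite cos_0; ring. Qed.
Lemma G0_zero : forall z, Rabs z <= 1 -> G0 z <= 0 -> z = 0.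
Proof. intros z Hz H. assert (Hc : cos z = 1) by (unfold G0 in H; nra).
 replace z with (2 * (z / 2)) in Hc by field. rewrite cos_2a_sin in Hc.
 assert (Hs : sin (z/2) = 0) by nra. apply abs_le in Hz.
 destruct (Rtotal_order z 0) as [Hl|[He|Hg]]; auto.
 - assert (0 < sin (- (z/2))) by (apply sin_pos_tech; lra). rewrite sin_neg in H0. lra.
 - assert (0 < sin (z/2)) by (apply sin_pos_tech; lra). lra. Qed.

Definition cv (a : nat) (s : R) (y : nat -> R) : R := match a with O => s | S i => y i end.

Lemma move_cv : forall a a' s y hh (K : R -> R),
  move a' s y hh (fun s y => K (cv a s y)) = K (cv a s y + if Nat.eqb a a' then hh else 0).
Proof. intros [|i] [|i'] s y hh K; simpl; try (f_equal; ring).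
 destruct (Nat.eqb i i'); f_equal; ring. Qed.

Lemma move_rsum : forall a' s y hh k (F : nat -> R -> (nat -> R) -> R),
  move a' s y hh (fun s y => rsum k (fun a => F a s y)) = rsum k (fun a => move a' s y hh (F a)).
Proof. intros [|i]; reflexivity. Qed.

Lemma move_const : forall a' s y hh (c : R), move a' s y hh (fun _ _ => c) = c.
Proof. intros [|i]; reflexivity. Qed.

Lemma dmove : forall g g' a a' s y c, (forall z, derivable_pt_lim g z (g' z)) ->
  derivable_pt_lim (fun hh => move a' s y hh (fun s y => g (cv a s y - c))) 0 (if Nat.eqb a a' then g' (cv a s y - c) else 0).
Proof. intros g g' a a' s y c Hd.
 assert (E : forall hh, move a' s y hh (fun s y => g (cv a s y - c)) = g (cv a s y + (if Nat.eqb a a' then hh else 0) - c)).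
 { intros hh. apply (move_cv a a' s y hh (fun w => g (w - c))). }
 eapply dpl_eq. intros z; symmetry; apply E. reflexivity.
 destruct (Nat.eqb a a').
 - eapply dpl_eq; [| |apply (derivable_pt_lim_comp (fun hh => cv a s y + hh - c) g 0 1 (g' (cv a s y - c)))].
   intros; reflexivity. ring.
   eapply dpl_eq; [| |apply (derivable_pt_lim_plus (fct_cte (cv a s y - c)) id 0 0 1)]. intros; unfold plus_fct, fct_cte, id; ring. ring.
   apply derivable_pt_lim_const. apply derivable_pt_lim_id.
   replace (cv a s y + 0 - c) with (cv a s y - c) by ring. apply Hd.
 - eapply dpl_eq; [| |apply (derivable_pt_lim_const (g (cv a s y - c)) 0)]. intros; unfold fct_cte; f_equal; ring. reflexivity. Qed.

Lemma contF_cv : forall n g g' a c, (forall z, derivable_pt_lim g z (g' z)) -> (a <= n)%nat ->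
  contF n (fun s y => g (cv a s y - c)).
Proof. intros n g g' a c Hd Ha t x Hx eps He.
 destruct (cont_of_d g g' Hd (cv a t x - c) eps He) as [del [Hdel H]]. exists del; split; auto.
 intros s y Hy Hs Hyx. apply H. replace (cv a s y - c - (cv a t x - c)) with (cv a s y - cv a t x) by ring.
 destruct a as [|i]; simpl; auto. eapply Rle_lt_trans; [apply (vdist_coord n y x i); lia|eauto]. Qed.

Lemma contF_const : forall n c, contF n (fun _ _ => c).
Proof. intros n c t x Hx eps He; exists 1; split; [lra|]; intros; rewrite Rminus_diag, Rabs_R0; lra. Qed.

Lemma contF_plus : forall n g h, contF n g -> contF n h -> contF n (fun s y => g s y + h s y).
Proof. intros n g h Hg Hh t x Hx e He. destruct (Hg t x Hx (e/2) ltac:(lra)) as [d1 [Hd1 H1]].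
 destruct (Hh t x Hx (e/2) ltac:(lra)) as [d2 [Hd2 H2]]. exists (Rmin d1 d2); split; [apply Rmin_pos; lra|].
 intros s y Hy Hs Hyx. pose proof (Rmin_l d1 d2); pose proof (Rmin_r d1 d2).
 specialize (H1 s y Hy ltac:(lra) ltac:(lra)). specialize (H2 s y Hy ltac:(lra) ltac:(lra)).
 replace (g s y + h s y - (g t x + h t x)) with ((g s y - g t x) + (h s y - h t x)) by ring.
 eapply Rle_lt_trans; [apply Rabs_triang|lra]. Qed.

Lemma contF_minus : forall n g h, contF n g -> contF n h -> contF n (fun s y => g s y - h s y).
Proof. intros n g h Hg Hh t x Hx e He. destruct (Hg t x Hx (e/2) ltac:(lra)) as [d1 [Hd1 H1]].
 destruct (Hh t x Hx (e/2) ltac:(lra)) as [d2 [Hd2 H2]]. exists (Rmin d1 d2); split; [apply Rmin_pos; lra|].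
 intros s y Hy Hs Hyx. pose proof (Rmin_l d1 d2); pose proof (Rmin_r d1 d2).
 specialize (H1 s y Hy ltac:(lra) ltac:(lra)). specialize (H2 s y Hy ltac:(lra) ltac:(lra)).
 replace (g s y - h s y - (g t x - h t x)) with ((g s y - g t x) - (h s y - h t x)) by ring.
 eapply Rle_lt_trans; [apply Rabs_triang|]. rewrite Rabs_Ropp. lra. Qed.

Lemma contF_rsum : forall n k (F : nat -> R -> (nat -> R) -> R), (forall a, (a < k)%nat -> contF n (F a)) ->
  contF n (fun s y => rsum k (fun a => F a s y)).
Proof. intros n k; induction k; intros F H; simpl.
 - apply contF_const.
 - apply (contF_plus n (fun s y => rsum k (fun a => F a s y)) (F k)); [apply IHk; intros; apply H; lia| apply H; lia]. Qed.

Lemma move_minus : forall a s y hh g h, move a s y hh (fun s y => g s y - h s y) = move a s y hh g - move a s y hh h.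
Proof. intros [|i]; reflexivity. Qed.

Section PSI.
Variables (T : R) (n : nat) (t0 : R) (x0 : nat -> R).
Definition cz a := cv a t0 x0.
Definition psi s y := rsum (S n) (fun a => G0 (cv a s y - cz a)).
Definition P1 a s y := G1 (cv a s y - cz a).
Definition P2 a a' s y := if Nat.eqb a a' then G2 (cv a s y - cz a) else 0.
Definition P3 a a' a'' s y := if andb (Nat.eqb a a') (Nat.eqb a a'') then G3 (cv a s y - cz a) else 0.

Lemma psi_partial : forall a, (a <= n)%nat -> partial n a psi (P1 a).
Proof. intros a Ha s y Hy. unfold psi.
 eapply dpl_eq. intros hh. symmetry. apply (move_rsum a s y hh (S n) (fun a s y => G0 (cv a s y - cz a))). reflexivity.
 eapply dpl_eq; [intros; reflexivity| |apply rsum_derive; intros i Hi; apply (dmove G0 G1 i a s y (cz i) dG0)].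
 unfold P1. rewrite (rsum_ext _ _ (fun j => if Nat.eqb j a then G1 (cv a s y - cz a) else 0)).
 apply rsum_delta; lia. intros i Hi. destruct (Nat.eqb_spec i a); subst; auto. Qed.

Lemma P1_partial : forall a a', partial n a' (P1 a) (P2 a a').
Proof. intros a a' s y Hy. unfold P1, P2. apply (dmove G1 G2 a a' s y (cz a) dG1). Qed.

Lemma P2_partial : forall a a' a'', partial n a'' (P2 a a') (P3 a a' a'').
Proof. intros a a' a'' s y Hy. unfold P2, P3. destruct (Nat.eqb a a'); simpl.
 - apply (dmove G2 G3 a a'' s y (cz a) dG2).
 - eapply dpl_eq; [| |apply (derivable_pt_lim_const 0 0)]. intros; rewrite move_const; reflexivity. reflexivity. Qed.

Lemma psi_contF : contF n psi.
Proof. unfold psi. apply (contF_rsum n (S n) (fun a s y => G0 (cv a s y - cz a))). intros a Ha. apply (contF_cv n G0 G1); auto. apply dG0. lia. Qed.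
Lemma P1_contF : forall a, (a <= n)%nat -> contF n (P1 a).
Proof. intros; unfold P1; apply (contF_cv n G1 G2); auto; apply dG1. Qed.
Lemma P2_contF : forall a a', (a <= n)%nat -> contF n (P2 a a').
Proof. intros; unfold P2; destruct (Nat.eqb a a'); [apply (contF_cv n G2 G3); auto; apply dG2|apply contF_const]. Qed.
Lemma P3_contF : forall a a' a'', (a <= n)%nat -> contF n (P3 a a' a'').
Proof. intros; unfold P3; destruct (andb (Nat.eqb a a') (Nat.eqb a a'')); [apply (contF_cv n G3 G4); auto; apply dG3|apply contF_const]. Qed.

Lemma C3lb_sub : forall phi D1 D2 D3, C3lb T n phi D1 D2 D3 ->
  C3lb T n (fun s y => phi s y - psi s y) (fun a s y => D1 a s y - P1 a s y)
    (fun a a' s y => D2 a a' s y - P2 a a' s y) (fun a a' a'' s y => D3 a a' a'' s y - P3 a a' a'' s y).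
Proof. intros phi D1 D2 D3 [Hc [H1 [H2 [H3 [M HM]]]]]. unfold coord in *.
 split; [|split; [|split; [|split]]].
 - apply contF_minus; auto. apply psi_contF.
 - intros a Ha. destruct (H1 a Ha) as [Hp Hcc]. split.
   + intros s y Hy. eapply dpl_eq; [intros hh; symmetry; apply move_minus| reflexivity|].
     apply (derivable_pt_lim_minus (fun hh => move a s y hh phi) (fun hh => move a s y hh psi)); [apply Hp; auto| apply psi_partial; auto].
   + apply contF_minus; auto. apply P1_contF; auto.
 - intros a a' Ha Ha'. destruct (H2 a a' Ha Ha') as [Hp Hcc]. split.
   + intros s y Hy. eapply dpl_eq; [intros hh; symmetry; apply (move_minus a' s y hh (D1 a) (P1 a))| reflexivity|].
     apply (derivable_pt_lim_minus (fun hh => move a' s y hh (D1 a)) (fun hh => move a' s y hh (P1 a))); [apply Hp; auto| apply P1_partial; auto].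
   + apply contF_minus; auto. apply P2_contF; auto.
 - intros a a' a'' Ha Ha' Ha''. destruct (H3 a a' a'' Ha Ha' Ha'') as [Hp Hcc]. split.
   + intros s y Hy. eapply dpl_eq; [intros hh; symmetry; apply (move_minus a'' s y hh (D2 a a') (P2 a a'))| reflexivity|].
     apply (derivable_pt_lim_minus (fun hh => move a'' s y hh (D2 a a')) (fun hh => move a'' s y hh (P2 a a'))); [apply Hp; auto| apply P2_partial; auto].
   + apply contF_minus; auto. apply P3_contF; auto.
 - exists (M + 10). intros a a' a'' Ha Ha' Ha'' s y Hs Hy. destruct (HM a a' a'' Ha Ha' Ha'' s y Hs Hy) as [B1 [B2 B3]].
   assert (Q1 : Rabs (P1 a s y) <= 10) by (unfold P1; apply G1_bound).
   assert (Q2 : Rabs (P2 a a' s y) <= 10) by (unfold P2; destruct (Nat.eqb a a'); [apply G2_bound| rewrite Rabs_R0; lra]).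
   assert (Q3 : Rabs (P3 a a' a'' s y) <= 10) by (unfold P3; destruct (andb (Nat.eqb a a') (Nat.eqb a a'')); [apply G3_bound| rewrite Rabs_R0; lra]).
   unfold Rminus. repeat split; (eapply Rle_trans; [apply Rabs_triang|]; rewrite Rabs_Ropp; lra). Qed.

Lemma psi_nonneg : forall s y, 0 <= psi s y.
Proof. intros; unfold psi; apply rsum_nonneg; intros; apply G0_nonneg. Qed.
Lemma psi_center : psi t0 x0 = 0.
Proof. unfold psi. rewrite (rsum_ext _ _ (fun _ => 0)); [apply rsum_zero|]. intros; rewrite Rminus_diag; apply G0_0. Qed.
Lemma P1_center : forall a, P1 a t0 x0 = 0.
Proof. intros; unfold P1; rewrite Rminus_diag; apply G1_0. Qed.
Lemma P2_center : forall a a', P2 a a' t0 x0 = 0.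
Proof. intros; unfold P2; destruct (Nat.eqb a a'); auto. rewrite Rminus_diag; apply G2_0. Qed.

Lemma psi_zero : forall s y, Rabs (s - t0) <= 1 -> vdist n y x0 <= 1 -> psi s y <= 0 ->
  s = t0 /\ forall i, (i < n)%nat -> y i = x0 i.
Proof. intros s y Hs Hy Hp.
 assert (Hall : forall a, (a < S n)%nat -> G0 (cv a s y - cz a) = 0).
 { intros a Ha. pose proof (rsum_term (S n) (fun a => G0 (cv a s y - cz a)) a ltac:(intros; apply G0_nonneg) Ha).
   pose proof (G0_nonneg (cv a s y - cz a)). unfold psi in Hp. lra. }
 split.
 - pose proof (Hall O ltac:(lia)). simpl in H. unfold cz in H; simpl in H. assert (s - t0 = 0) by (apply G0_zero; [auto|lra]). lra.
 - intros i Hi. pose proof (Hall (S i) ltac:(lia)). unfold cz in H; simpl in H.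
   assert (y i - x0 i = 0); [|lra]. apply G0_zero; [|lra].
   eapply Rle_trans; [apply (vdist_coord n y x0 i Hi)|auto]. Qed.
End PSI.

Lemma cv_inv : Un_cv (fun k => / (INR k + 1)) 0.
Proof. intros e He. destruct (inv_small e He) as [K HK]. exists K; intros k Hk. unfold R_dist. rewrite Rminus_0_r.
 rewrite Rabs_right; [apply HK; auto|]. apply Rle_ge, Rlt_le, Rinv_0_lt_compat. pose proof (pos_INR k); lra. Qed.

Lemma evt : forall n (K : R -> (nat -> R) -> Prop) (F : R -> (nat -> R) -> R) M,
 (forall s y, K s y -> Rabs s <= M /\ forall i, (i < n)%nat -> Rabs (y i) <= M) ->
 (forall ss ys s0 y0, (forall j, K (ss j) (ys j)) -> vec n y0 -> Un_cv ss s0 -> Un_cv (fun k => vdist n (ys k) y0) 0 -> K s0 y0) ->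
 (forall ss ys s y, K s y -> (forall j, K (ss j) (ys j)) -> Un_cv ss s -> Un_cv (fun k => vdist n (ys k) y) 0 ->
    Un_cv (fun k => F (ss k) (ys k)) (F s y)) ->
 (exists s y, K s y) ->
 exists s y, K s y /\ forall s' y', K s' y' -> F s y <= F s' y'.
Proof. intros n K F M HB HC HF [s1 [y1 Hk1]].
 assert (Hext : forall (ps : nat -> R * (nat -> R)), (forall j, K (fst (ps j)) (snd (ps j))) ->
    exists sg s0 y0, incr sg /\ K s0 y0 /\ Un_cv (fun k => F (fst (ps (sg k))) (snd (ps (sg k)))) (F s0 y0)).
 { intros ps Hps. destruct (BWpt n (fun j => fst (ps j)) (fun j => snd (ps j)) M) as [sg [s0 [y0 [Hsg [Hy0 [Hs Hy]]]]]].
   intros j; apply (HB _ _ (Hps j)). intros j i Hi; apply (HB _ _ (Hps j)); auto.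
   assert (K s0 y0) by (apply (HC (fun k => fst (ps (sg k))) (fun k => snd (ps (sg k)))); auto).
   exists sg, s0, y0; split; [auto|split; [auto|]]. apply (HF (fun k => fst (ps (sg k))) (fun k => snd (ps (sg k)))); auto. }
 assert (Hlb : exists m, forall s y, K s y -> m <= F s y).
 { apply NNPP; intros Hn.
   assert (Hp : forall j : nat, exists p : R * (nat -> R), K (fst p) (snd p) /\ F (fst p) (snd p) < - INR j).
   { intros j. apply NNPP; intros Hj. apply Hn. exists (- INR j). intros s y Hk. apply Rnot_lt_le. intros Hl. apply Hj. exists (s, y); auto. }
   pose (ps := fun j => proj1_sig (constructive_indefinite_description _ (Hp j))).
   assert (Hps : forall j, K (fst (ps j)) (snd (ps j)) /\ F (fst (ps j)) (snd (ps j)) < - INR j).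
   { intros j; unfold ps; destruct (constructive_indefinite_description _ (Hp j)); auto. }
   destruct (Hext ps (fun j => proj1 (Hps j))) as [sg [s0 [y0 [Hsg [Hk Hc]]]]].
   destruct (cv_bounded _ _ Hc) as [B HBd]. destruct (nat_large B) as [k Hk'].
   specialize (HBd k). destruct (Hps (sg k)) as [_ Hl]. pose proof (incr_ge' sg Hsg k) as Hg. apply le_INR in Hg.
   apply abs_le in HBd. lra. }
 destruct Hlb as [m Hm].
 set (E := fun w => exists s y, K s y /\ - w = F s y).
 destruct (completeness E) as [S [HS1 HS2]].
 { exists (- m). intros w [s [y [Hk Hw]]]. specialize (Hm s y Hk). lra. }
 { exists (- F s1 y1), s1, y1. split; auto. ring. }
 set (L := - S).
 assert (HL1 : forall s y, K s y -> L <= F s y).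
 { intros s y Hk. assert (E (- F s y)) by (exists s, y; split; auto; ring). specialize (HS1 _ H). unfold L; lra. }
 assert (HL2 : forall e, 0 < e -> exists s y, K s y /\ F s y < L + e).
 { intros e He. apply NNPP; intros Hn. assert (S <= S - e); [|lra]. apply HS2. intros w [s [y [Hk Hw]]].
   apply Rnot_lt_le; intros Hl. apply Hn. exists s, y; split; auto. unfold L; lra. }
 assert (Hp : forall j : nat, exists p : R * (nat -> R), K (fst p) (snd p) /\ F (fst p) (snd p) < L + / (INR j + 1)).
 { intros j. destruct (HL2 (/ (INR j + 1))) as [s [y [Hk Hl]]]. apply Rinv_0_lt_compat; pose proof (pos_INR j); lra.
   exists (s, y); auto. }
 pose (ps := fun j => proj1_sig (constructive_indefinite_description _ (Hp j))).
 assert (Hps : forall j, K (fst (ps j)) (snd (ps j)) /\ F (fst (ps j)) (snd (ps j)) < L + / (INR j + 1)).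
 { intros j; unfold ps; destruct (constructive_indefinite_description _ (Hp j)); auto. }
 destruct (Hext ps (fun j => proj1 (Hps j))) as [sg [s0 [y0 [Hsg [Hk Hc]]]]].
 exists s0, y0; split; auto. intros s' y' Hk'.
 assert (F s0 y0 <= L).
 { replace L with (L + 0) by ring. apply (cv_le_ev (fun k => F (fst (ps (sg k))) (snd (ps (sg k)))) (fun k => L + / (INR k + 1)) _ _); auto.
   exists O; intros k _. destruct (Hps (sg k)) as [_ Hl]. pose proof (incr_ge' sg Hsg k) as Hg. apply le_INR in Hg.
   assert (/ (INR (sg k) + 1) <= / (INR k + 1)) by (apply Rinv_le_contravar; pose proof (pos_INR k); lra). lra.
   apply CV_plus; [apply cv_const| apply cv_inv]. }
 specialize (HL1 s' y' Hk'). lra. Qed.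

Lemma contF_seq : forall n g ss ys s y, contF n g -> vec n y -> (forall j, vec n (ys j)) ->
  Un_cv ss s -> Un_cv (fun j => vdist n (ys j) y) 0 -> Un_cv (fun j => g (ss j) (ys j)) (g s y).
Proof. intros n g ss ys s y Hg Hy Hys Hs Hv e He. destruct (Hg s y Hy e He) as [del [Hd H]].
 destruct (Hs del Hd) as [N1 H1]. destruct (Hv del Hd) as [N2 H2]. exists (max N1 N2); intros j Hj.
 unfold R_dist. apply H; auto. apply H1; lia. specialize (H2 j ltac:(lia)). unfold R_dist in H2.
 rewrite Rminus_0_r in H2. pose proof (RRle_abs (vdist n (ys j) y)). lra. Qed.

Lemma contD_seq : forall T n g ss ys s y, contD T n g -> 0 <= s <= T -> vec n y -> (forall j, vec n (ys j)) ->
  (forall j, 0 <= ss j <= T) ->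
  Un_cv ss s -> Un_cv (fun j => vdist n (ys j) y) 0 -> Un_cv (fun j => g (ss j) (ys j)) (g s y).
Proof. intros T n g ss ys s y Hg Hs0 Hy Hys Hss Hs Hv e He. destruct (Hg s y Hs0 Hy e He) as [del [Hd H]].
 destruct (Hs del Hd) as [N1 H1]. destruct (Hv del Hd) as [N2 H2]. exists (max N1 N2); intros j Hj.
 unfold R_dist. apply H; auto. apply H1; lia. specialize (H2 j ltac:(lia)). unfold R_dist in H2.
 rewrite Rminus_0_r in H2. pose proof (RRle_abs (vdist n (ys j) y)). lra. Qed.

Lemma negpart_lip : forall a b, Rabs (negpart a - negpart b) <= Rabs (a - b).
Proof. intros a b. unfold negpart, Rmax. destruct (Rle_dec 0 (-a)); destruct (Rle_dec 0 (-b)); apply abs_le_i;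
 pose proof (RRle_abs (a - b)); pose proof (RRle_abs (b - a)); rewrite Rabs_minus_sym in H0; lra. Qed.

Lemma negpart_ge : forall a, - a <= negpart a.
Proof. intros; unfold negpart; apply Rmax_r. Qed.
Lemma negpart_nonneg : forall a, 0 <= negpart a.
Proof. intros; unfold negpart; apply Rmax_l. Qed.

Lemma vnorm_coord : forall n x i, (i < n)%nat -> Rabs (x i) <= vnorm n x.
Proof. intros; unfold vnorm. apply (rsum_term n (fun i => Rabs (x i))); auto. intros; apply Rabs_pos. Qed.

Theorem proposition4p1 (T : R) (n d : nat) (U V : Type)
  (dU : U -> U -> R) (dV : V -> V -> R)
  (b : R -> (nat -> R) -> U -> V -> (nat -> R))
  (sig : R -> (nat -> R) -> U -> V -> nat -> nat -> R)
  (f : R -> (nat -> R) -> R -> (nat -> R) -> U -> V -> R)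
  (Phi : (nat -> R) -> R) (h : R -> (nat -> R) -> R)
  (W : nat -> R -> (nat -> R) -> R) (Wt : R -> (nat -> R) -> R) :
  0 < T ->
  compact_metric_space U dU -> compact_metric_space V dV ->
  H3_1 T n d U V dU dV b sig ->
  H3_2 T n d U V dU dV f Phi h ->
  (forall m, contD T n (W m)) ->
  (forall m, lin_growth T n (W m)) ->
  (forall m t x, 0 <= t <= T -> vec n x -> W m t x <= W (S m) t x) ->
  (forall m, @visc_sol_pen U V T n d b sig f Phi h m (W m)) ->
  (forall t x, 0 <= t <= T -> vec n x -> Un_cv (fun m => W m t x) (Wt t x)) ->
  lin_growth T n Wt ->
  @visc_super_obst U V T n d b sig f Phi h Wt.
Proof.
intros HT HU HV H31 H32 Wcont Wlin Wmono Wsol Wlim Wtlin.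
destruct H31 as [Hbc [Lb Hbl]].
destruct H32 as [Hfc [[Lf Hfl] [_ [Hhc [[Lh Hhl] _]]]]].
assert (Wmono' : forall k m, (k <= m)%nat -> forall t x, 0 <= t <= T -> vec n x -> W k t x <= W m t x).
{ intros k m Hkm t x Ht Hx. induction Hkm; [lra|]. specialize (Wmono m t x Ht Hx). lra. }
assert (WleWt : forall k t x, 0 <= t <= T -> vec n x -> W k t x <= Wt t x).
{ intros k t x Ht Hx. apply (cv_le_ev (fun _ => W k t x) (fun m => W m t x)); [|apply cv_const|apply Wlim; auto].
  exists k; intros j Hj; apply Wmono'; auto. }
split; [|split].
- intros t x Ht Hx eps He. destruct (Wlim t x Ht Hx (eps/2) ltac:(lra)) as [k Hk]. specialize (Hk k (le_n k)). unfold R_dist in Hk.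
  destruct (Wcont k t x Ht Hx (eps/2) ltac:(lra)) as [del [Hd H]]. exists del; split; auto.
  intros s y Hs Hy Hst Hyx. specialize (H s y Hs Hy Hst Hyx). pose proof (WleWt k s y Hs Hy).
  apply abs_lt in Hk; apply abs_lt in H. lra.
- intros x Hx. assert (Wt T x = Phi x).
  { apply (UL_sequence (fun m => W m T x)). apply Wlim; auto; lra.
    replace (fun m => W m T x) with (fun _ : nat => Phi x). apply cv_const.
    apply functional_extensionality; intros m. destruct (Wsol m) as [H _]. rewrite H; auto. }
  lra.
- intros phi D1 D2 D3 Hphi t x Ht Hx [del [Hdel Hmin]].
  pose (r := Rmin (Rmin (del/2) ((T - t)/2)) 1).
  assert (Hr : 0 < r /\ r < del /\ t + r < T /\ r <= 1).
  { pose proof (Rmin_l (Rmin (del/2) ((T - t)/2)) 1). pose proof (Rmin_r (Rmin (del/2) ((T - t)/2)) 1).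
    pose proof (Rmin_l (del/2) ((T - t)/2)). pose proof (Rmin_r (del/2) ((T - t)/2)).
    assert (0 < r) by (apply Rmin_pos; [apply Rmin_pos|]; lra). fold r in H, H0. lra. }
  destruct Hr as [Hr0 [Hr1 [Hr2 Hr3]]].
  pose (zeta := fun s y => phi s y - psi n t x s y).
  pose (Kp := fun s y => 0 <= s <= T /\ Rabs (s - t) <= r /\ vec n y /\ vdist n y x <= r).
  pose proof (C3lb_sub T n t x phi D1 D2 D3 Hphi) as HC.
  assert (Hzc : contF n zeta) by (destruct HC as [Hz _]; exact Hz).
  assert (HKcl : forall ss ys s0 y0, (forall j, Kp (ss j) (ys j)) -> vec n y0 -> Un_cv ss s0 ->
            Un_cv (fun k => vdist n (ys k) y0) 0 -> Kp s0 y0).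
  { intros ss ys s0 y0 HK Hy0 Hs Hy. split; [split|split; [|split; [auto|]]].
    - apply (cv_le_ev (fun _ => 0) ss); auto. exists O; intros j _; apply (HK j). apply cv_const.
    - apply (cv_le_ev ss (fun _ => T)); auto. exists O; intros j _; apply (HK j). apply cv_const.
    - apply (cv_le_ev (fun j => Rabs (ss j - t)) (fun _ => r)). exists O; intros j _; apply (HK j).
      apply (cv_of_bound _ _ (fun j => Rabs (ss j - s0))). intros; eapply Rle_trans; [apply Rabs_triang_inv2|]; right; f_equal; ring.
      exact (proj1 (cv_abs0 _ _) Hs). apply cv_const.
    - apply (cv_le_ev (fun _ => vdist n y0 x) (fun j => vdist n (ys j) y0 + r)). exists O; intros j _.
      pose proof (vdist_tri n y0 (ys j) x). rewrite (vdist_sym n y0 (ys j)) in H. destruct (HK j) as [_ [_ [_ H1]]]. lra.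
      apply cv_const. pose proof (CV_plus _ _ _ _ Hy (cv_const r)) as Hc; rewrite Rplus_0_l in Hc; exact Hc. }
  pose (M0 := T + vnorm n x + 1).
  assert (HKb : forall s y, Kp s y -> Rabs s <= M0 /\ forall i, (i < n)%nat -> Rabs (y i) <= M0).
  { intros s y [Hs [_ [_ Hy]]]. assert (0 <= vnorm n x) by (apply rsum_nonneg; intros; apply Rabs_pos). split.
    - apply abs_le_i; unfold M0; lra.
    - intros i Hi. pose proof (vnorm_coord n x i Hi). pose proof (vdist_coord n y x i Hi).
      pose proof (Rabs_triang (y i - x i) (x i)). replace (y i - x i + x i) with (y i) in H2 by ring. unfold M0; lra. }
  assert (HKt : Kp t x).
  { split; [lra|split; [rewrite Rminus_diag, Rabs_R0; lra|split; [auto|rewrite vdist_self; lra]]]. }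
  assert (Hmin_ex : forall m, exists p : R * (nat -> R), Kp (fst p) (snd p) /\
     forall s' y', Kp s' y' -> W m (fst p) (snd p) - zeta (fst p) (snd p) <= W m s' y' - zeta s' y').
  { intros m. destruct (evt n Kp (fun s y => W m s y - zeta s y) M0 HKb HKcl) as [s [y [Hk Hm]]].
    - intros ss ys s y Hk HKs Hs Hy. apply CV_minus.
      + destruct Hk as [Hk1 [_ [Hk3 _]]]. apply (contD_seq T n (W m)); auto; intros j; apply (HKs j).
      + destruct Hk as [_ [_ [Hk3 _]]]. apply (contF_seq n zeta); auto. intros j; apply (HKs j).
    - exists t, x; auto.
    - exists (s, y); simpl; auto. }
  pose (ps := fun m => proj1_sig (constructive_indefinite_description _ (Hmin_ex m))).
  assert (Hps : forall m, Kp (fst (ps m)) (snd (ps m)) /\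
     forall s' y', Kp s' y' -> W m (fst (ps m)) (snd (ps m)) - zeta (fst (ps m)) (snd (ps m)) <= W m s' y' - zeta s' y').
  { intros m; unfold ps; destruct (constructive_indefinite_description _ (Hmin_ex m)); auto. }
  destruct (BWpt n (fun j => fst (ps j)) (fun j => snd (ps j)) M0) as [sg [s0 [y0 [Hsg [Hy0 [Cs Cy]]]]]].
  { intros j; apply (HKb _ _ (proj1 (Hps j))). }
  { intros j i Hi; apply (HKb _ _ (proj1 (Hps j))); auto. }
  pose (Sk := fun k => fst (ps (sg k))). pose (Yk := fun k => snd (ps (sg k))).
  fold Sk in Cs. fold Yk in Cy.
  assert (HKk : forall k, Kp (Sk k) (Yk k)) by (intros k; apply (Hps (sg k))).
  assert (HSk : forall k, 0 <= Sk k <= T) by (intros k; apply (HKk k)).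
  assert (HYk : forall k, vec n (Yk k)) by (intros k; apply (HKk k)).
  assert (Hge : forall k, (k <= sg k)%nat) by (apply incr_ge'; auto).
  assert (Hk0 : Kp s0 y0) by (apply (HKcl Sk Yk); auto).
  assert (Hzt : zeta t x = phi t x) by (unfold zeta; rewrite psi_center; ring).
  assert (HA : forall k, W (sg k) (Sk k) (Yk k) <= Wt t x - phi t x + zeta (Sk k) (Yk k)).
  { intros k. destruct (Hps (sg k)) as [_ Hm]. specialize (Hm t x HKt). fold (Sk k) (Yk k) in Hm.
    pose proof (WleWt (sg k) t x ltac:(lra) Hx). lra. }
  assert (Hzconv : Un_cv (fun k => zeta (Sk k) (Yk k)) (zeta s0 y0)) by (apply (contF_seq n zeta); auto; apply Hk0).
  assert (Step1 : forall j, W j s0 y0 <= Wt t x - phi t x + zeta s0 y0).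
  { intros j. apply (cv_le_ev (fun k => W j (Sk k) (Yk k)) (fun k => Wt t x - phi t x + zeta (Sk k) (Yk k))).
    - exists j; intros k Hk. eapply Rle_trans; [|apply HA]. apply Wmono'; auto. specialize (Hge k); lia.
    - apply (contD_seq T n (W j)); auto; apply Hk0.
    - apply CV_plus; auto. apply cv_const. }
  assert (Step2 : Wt s0 y0 <= Wt t x - phi t x + zeta s0 y0).
  { apply (cv_le_ev (fun j => W j s0 y0) (fun _ => Wt t x - phi t x + zeta s0 y0)).
    exists O; intros; apply Step1. apply Wlim; apply Hk0. apply cv_const. }
  assert (Step3 : Wt t x - phi t x <= Wt s0 y0 - phi s0 y0).
  { destruct Hk0 as [H1 [H2 [H3 H4]]]. apply Hmin; auto; lra. }
  assert (Hpsi0 : psi n t x s0 y0 <= 0) by (unfold zeta in Step2; lra).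
  destruct (psi_zero n t x s0 y0) as [E1 E2]; [destruct Hk0 as [_ [H2 _]]; lra|destruct Hk0 as [_ [_ [_ H4]]]; lra|auto|].
  assert (E3 : y0 = x).
  { apply functional_extensionality; intros i. destruct (Nat.ltb_spec i n); auto. rewrite Hy0, Hx; auto. }
  subst s0 y0.
  assert (Wconv : Un_cv (fun k => W (sg k) (Sk k) (Yk k)) (Wt t x)).
  { intros e He. destruct (Wlim t x ltac:(lra) Hx (e/2) ltac:(lra)) as [N1 HN1]. specialize (HN1 N1 (le_n N1)).
    unfold R_dist in HN1. apply abs_lt in HN1.
    destruct (contD_seq T n (W N1) Sk Yk t x (Wcont N1) ltac:(lra) Hx HYk HSk Cs Cy (e/2) ltac:(lra)) as [N2 HN2].
    destruct (Hzconv (e/2) ltac:(lra)) as [N3 HN3].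
    exists (max N1 (max N2 N3)); intros k Hk. specialize (HN2 k ltac:(lia)). specialize (HN3 k ltac:(lia)).
    unfold R_dist in *. cbv beta in HN2, HN3 |- *. apply abs_lt in HN2. apply abs_lt in HN3. rewrite Hzt in HN3.
    pose proof (HA k). assert (W N1 (Sk k) (Yk k) <= W (sg k) (Sk k) (Yk k)) by (apply Wmono'; auto; specialize (Hge k); lia).
    apply abs_lt_i; lra. }
  destruct (Cs (r/2) ltac:(lra)) as [Na HNa]. destruct (Cy (r/2) ltac:(lra)) as [Nb HNb].
  pose (N := max Na Nb).
  assert (Hint : forall k, (N <= k)%nat -> Rabs (Sk k - t) < r/2 /\ vdist n (Yk k) x < r/2).
  { intros k Hk. specialize (HNa k ltac:(unfold N in Hk; lia)). specialize (HNb k ltac:(unfold N in Hk; lia)).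
    unfold R_dist in *. cbv beta in HNa, HNb. rewrite Rminus_0_r in HNb. pose proof (RRle_abs (vdist n (Yk k) x)). fold (Yk k) in HNb. split; lra. }
  pose (Ak := fun k => 0 - (D1 O (Sk k) (Yk k) - P1 t x O (Sk k) (Yk k))
     - @Hminus U V n d b sig f (Sk k) (Yk k) (W (sg k) (Sk k) (Yk k))
         (fun i => D1 (S i) (Sk k) (Yk k) - P1 t x (S i) (Sk k) (Yk k))
         (fun i j => D2 (S i) (S j) (Sk k) (Yk k) - P2 t x (S i) (S j) (Sk k) (Yk k))).
  assert (Hineq : forall k, (N <= k)%nat -> INR (sg k) * negpart (W (sg k) (Sk k) (Yk k) - h (Sk k) (Yk k)) <= Ak k).
  { intros k Hk. destruct (Hint k Hk) as [I1 I2]. destruct (Wsol (sg k)) as [_ [_ Hsup]].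
    assert (Hlm : loc_min T n (fun s y => W (sg k) s y - (phi s y - psi n t x s y)) (Sk k) (Yk k)).
    { exists (r/2); split; [lra|]. intros s' y' Hs' Hy' Hd1 Hd2.
      destruct (Hps (sg k)) as [_ Hm]. fold (Sk k) (Yk k) in Hm. unfold zeta in Hm. apply Hm.
      split; auto. split; [|split; auto].
      - pose proof (Rabs_triang (s' - Sk k) (Sk k - t)). replace (s' - Sk k + (Sk k - t)) with (s' - t) in H by ring. lra.
      - pose proof (vdist_tri n y' (Yk k) x). lra. }
    assert (Hsk : 0 <= Sk k < T) by (split; [apply HSk|]; apply abs_lt in I1; lra).
    pose proof (Hsup _ _ _ _ HC (Sk k) (Yk k) Hsk (HYk k) Hlm) as H. cbv beta in H.
    rewrite (Hpen_shift dU dV T n d b sig f HU HV Hbc Lb Hbl Hfc Lf Hfl) in H by (auto; lra).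
    unfold Ak. lra. }
  destruct HC as [_ [HC1 [HC2 _]]].
  assert (Ht' : 0 <= t <= T) by lra.
  assert (Ca : Un_cv (fun k => D1 O (Sk k) (Yk k) - P1 t x O (Sk k) (Yk k)) (D1 O t x)).
  { replace (D1 O t x) with (D1 O t x - P1 t x O t x) by (rewrite P1_center; ring).
    apply (contF_seq n (fun s y => D1 O s y - P1 t x O s y)); auto. apply (HC1 O); unfold coord; lia. }
  assert (CH : Un_cv (fun k => @Hminus U V n d b sig f (Sk k) (Yk k) (W (sg k) (Sk k) (Yk k))
         (fun i => D1 (S i) (Sk k) (Yk k) - P1 t x (S i) (Sk k) (Yk k))
         (fun i j => D2 (S i) (S j) (Sk k) (Yk k) - P2 t x (S i) (S j) (Sk k) (Yk k)))
      (@Hminus U V n d b sig f t x (Wt t x) (fun i => D1 (S i) t x) (fun i j => D2 (S i) (S j) t x))).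
  { apply (Hminus_cv dU dV T n d b sig f HU HV Hbc Lb Hbl Hfc Lf Hfl Sk Yk (fun k => W (sg k) (Sk k) (Yk k))
      (fun k i => D1 (S i) (Sk k) (Yk k) - P1 t x (S i) (Sk k) (Yk k))
      (fun k i j => D2 (S i) (S j) (Sk k) (Yk k) - P2 t x (S i) (S j) (Sk k) (Yk k))); auto.
    - intros i Hi. replace (D1 (S i) t x) with (D1 (S i) t x - P1 t x (S i) t x) by (rewrite P1_center; ring).
      apply (contF_seq n (fun s y => D1 (S i) s y - P1 t x (S i) s y)); auto. apply (HC1 (S i)); unfold coord; lia.
    - intros i j Hi Hj. replace (D2 (S i) (S j) t x) with (D2 (S i) (S j) t x - P2 t x (S i) (S j) t x) by (rewrite P2_center; ring).
      apply (contF_seq n (fun s y => D2 (S i) (S j) s y - P2 t x (S i) (S j) s y)); auto. apply (HC2 (S i) (S j)); unfold coord; lia. }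
  assert (CA : Un_cv Ak (0 - D1 O t x - @Hminus U V n d b sig f t x (Wt t x) (fun i => D1 (S i) t x) (fun i j => D2 (S i) (S j) t x))).
  { apply CV_minus; auto. apply CV_minus; auto. apply cv_const. }
  assert (Step7 : 0 <= 0 - D1 O t x - @Hminus U V n d b sig f t x (Wt t x) (fun i => D1 (S i) t x) (fun i j => D2 (S i) (S j) t x)).
  { apply (cv_le_ev (fun _ => 0) Ak); auto; [|apply cv_const]. exists N; intros k Hk. eapply Rle_trans; [|apply Hineq; auto].
    apply Rmult_le_pos; [apply pos_INR|apply negpart_nonneg]. }
  assert (Chk : Un_cv (fun k => h (Sk k) (Yk k)) (h t x)).
  { apply (cv_of_bound _ _ (fun k => Lh * vdist n (Yk k) x + Rabs (h (Sk k) x - h t x))).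
    - intros k. replace (h (Sk k) (Yk k) - h t x) with ((h (Sk k) (Yk k) - h (Sk k) x) + (h (Sk k) x - h t x)) by ring.
      eapply Rle_trans; [apply Rabs_triang|]. apply Rplus_le_compat_r. apply Hhl; auto.
    - apply cv_lin2; auto. intros e He. destruct (Hhc x Hx t Ht' e He) as [dl [Hdl Hh]].
      destruct (Cs dl Hdl) as [N4 HN4]. exists N4; intros k Hk. unfold R_dist. rewrite Rminus_0_r, Rabs_Rabsolu.
      apply Hh; auto. apply HN4; auto. }
  assert (Cneg : Un_cv (fun k => negpart (W (sg k) (Sk k) (Yk k) - h (Sk k) (Yk k))) (negpart (Wt t x - h t x))).
  { apply (cv_of_bound _ _ (fun k => Rabs ((W (sg k) (Sk k) (Yk k) - h (Sk k) (Yk k)) - (Wt t x - h t x)))).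
    intros; apply negpart_lip. exact (proj1 (cv_abs0 _ _) (CV_minus _ _ _ _ Wconv Chk)). }
  destruct (cv_bounded _ _ CA) as [B HB].
  assert (Step8 : negpart (Wt t x - h t x) <= 0).
  { replace 0 with (2 * B * 0) by ring.
    apply (cv_le_ev (fun k => negpart (W (sg k) (Sk k) (Yk k) - h (Sk k) (Yk k))) (fun k => 2 * B * / (INR k + 1))); auto.
    2: apply CV_mult; [apply cv_const|apply cv_inv].
    exists (max N 1); intros k Hk. pose proof (Hineq k ltac:(lia)) as Hi. specialize (HB k).
    apply abs_le in HB. pose proof (Hge k) as Hg. apply le_INR in Hg.
    assert (H1 : 1 <= INR k) by (replace 1 with (INR 1) by reflexivity; apply le_INR; lia).
    set (ng := negpart (W (sg k) (Sk k) (Yk k) - h (Sk k) (Yk k))) in *.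
    assert (Hn0 : 0 <= ng) by apply negpart_nonneg.
    assert (Hc : ng * (INR k + 1) <= 2 * B) by nra.
    assert (Hpos : 0 < / (INR k + 1)) by (apply Rinv_0_lt_compat; lra).
    replace ng with (ng * (INR k + 1) * / (INR k + 1)) by (field; lra).
    apply Rmult_le_compat_r; lra. }
  pose proof (negpart_ge (Wt t x - h t x)).
  unfold Rmin. destruct (Rle_dec (Wt t x - h t x) (- D1 O t x - @Hminus U V n d b sig f t x (Wt t x) (fun i => D1 (S i) t x) (fun i j => D2 (S i) (S j) t x))); lra.
Qed.
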